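(* Let $1\leq s\leq\infty$ and $n\geq 2$. Let $\lambda$ be an arc of class $\mathcal{C}^s$ in $\mathbb{R}^n$ and let $\Omega$ be a neighborhood of $\lambda$. Then there is a simple closed curve $\gamma$ of class $\mathcal{C}^s$ in $\mathbb{R}^n$ that contains $\lambda$ and is contained in $\Omega$.
   Context: An arc of class $\mathcal{C}^s$ is the image of an injective $\mathcal{C}^s$ map of a closed interval with nowhere-vanishing derivative; a simple closed curve of class $\mathcal{C}^s$ is the image of an injective $\mathcal{C}^s$ map of the unit circle with nowhere-vanishing derivative. Neighborhoods are open. *)

(* Defs.v *)
From Stdlib Require Import Reals.
From Coquelicot Require Import Coquelicot.
From mathcomp Require Import ssreflect ssrbool fintype.
Open Scope R_scope.

Definition Eucl (n : nat) := 'I_n -> R.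

Inductive smoothness := Fin (k : nat) | Inf.

Definition smooth_ge1 (s : smoothness) : Prop :=
  match s with Fin k => (1 <= k)%nat | Inf => True end.

Definition Ck_real (k : nat) (f : R -> R) : Prop :=
  forall m : nat, (m <= k)%nat ->
    forall x : R, ex_derive_n f m x /\ continuous (Derive_n f m) x.

Definition Cs_real (s : smoothness) (f : R -> R) : Prop :=
  match s with
  | Fin k => Ck_real k f
  | Inf => forall k, Ck_real k f
  end.

Definition Cs_map {n : nat} (s : smoothness) (f : R -> Eucl n) : Prop :=
  forall i : 'I_n, Cs_real s (fun t => f t i).

Definition deriv_nonzero {n : nat} (f : R -> Eucl n) (t : R) : Prop :=
  exists i : 'I_n, Derive (fun u => f u i) t <> 0.

(* A C^s map on the closed interval is taken
   to be the restriction of a C^s map defined on R (equivalent by Whitney /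
   Seeley extension). *)
Definition is_arc {n : nat} (s : smoothness) (L : Eucl n -> Prop) : Prop :=
  exists f : R -> Eucl n,
    Cs_map s f /\
    (forall t1 t2, 0 <= t1 <= 1 -> 0 <= t2 <= 1 -> f t1 = f t2 -> t1 = t2) /\
    (forall t, 0 <= t <= 1 -> deriv_nonzero f t) /\
    (forall p, L p <-> exists t, 0 <= t <= 1 /\ p = f t).

(* A simple closed curve of class C^s: image of an injective C^s map of the
   unit circle with nowhere-vanishing derivative; maps of the circle
   R/Z are represented by 1-periodic maps R -> R^n, injective on [0,1). *)
Definition is_simple_closed_curve {n : nat} (s : smoothness) (G : Eucl n -> Prop)
  : Prop :=
  exists g : R -> Eucl n,
    Cs_map s g /\
    (forall t, g (t + 1) = g t) /\
    (forall t1 t2, 0 <= t1 < 1 -> 0 <= t2 < 1 -> g t1 = g t2 -> t1 = t2) /\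
    (forall t, deriv_nonzero g t) /\
    (forall p, G p <-> exists t, p = g t).

(* open subsets of R^n (Euclidean topology = product/sup-norm topology) *)
Definition open_Rn {n : nat} (O : Eucl n -> Prop) : Prop :=
  forall p, O p -> exists eps : R, 0 < eps /\
    forall q : Eucl n, (forall i, Rabs (q i - p i) < eps) -> O q.

Definition nbhd_of {n : nat} (O L : Eucl n -> Prop) : Prop :=
  open_Rn O /\ (forall p, L p -> O p).

(* Main.v *)
Require Import Defs.
From Stdlib Require Import Reals.
From Coquelicot Require Import Coquelicot.
From mathcomp Require Import ssreflect ssrbool fintype.
From Stdlib Require Import Lra Lia Psatz ZArith.
From Stdlib Require Import FunctionalExtensionality Classical ClassicalEpsilon.
From mathcomp Require Import eqtype seq.
Open Scope R_scope.

Fixpoint Cn (k : nat) (F : R -> R) : Prop :=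
  match k with
  | O => forall x, continuous F x
  | S k => (forall x, ex_derive F x) /\ Cn k (Derive F)
  end.

Lemma Cn_ext k F G : (forall x, F x = G x) -> Cn k F -> Cn k G.
Proof.
  intros H. replace G with F; auto. now apply functional_extensionality.
Qed.

Lemma Cn_cont k F : Cn k F -> forall x, continuous F x.
Proof.
  destruct k; simpl; intros H x. apply H. apply: (@ex_derive_continuous R_AbsRing R_NormedModule). apply H.
Qed.

Lemma Cn_down k F : Cn (S k) F -> Cn k F.
Proof.
  revert F; induction k; intros F H.
  - simpl. apply Cn_cont with 1%nat. exact H.
  - destruct H as [H1 H2]. split; auto.
Qed.

Lemma Cn_le k m F : (m <= k)%nat -> Cn k F -> Cn m F.
Proof.
  induction 1; auto. intros H0. apply IHle, Cn_down, H0.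
Qed.

Lemma Cn_const k c : Cn k (fun _ => c).
Proof.
  revert c; induction k; intros c; simpl.
  - intros; apply continuous_const.
  - split. intros; auto_derive; auto.
    apply Cn_ext with (fun _ => 0). intros x; now rewrite Derive_const. apply IHk.
Qed.

Lemma Cn_id k : Cn k (fun x => x).
Proof.
  destruct k; simpl.
  - intros; apply continuous_id.
  - split. intros; auto_derive; auto.
    apply Cn_ext with (fun _ => 1). intros x; now rewrite Derive_id. apply Cn_const.
Qed.

Lemma Cn_plus k F G : Cn k F -> Cn k G -> Cn k (fun x => F x + G x).
Proof.
  revert F G; induction k; intros F G HF HG; simpl in *.
  - intros x; apply (continuous_plus F G); auto.
  - destruct HF as [HF1 HF2], HG as [HG1 HG2]. split.
    + intros x; apply (ex_derive_plus F G); auto.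
    + apply Cn_ext with (fun x => Derive F x + Derive G x).
      intros x; rewrite Derive_plus; auto. apply IHk; auto.
Qed.

Lemma Cn_mult k F G : Cn k F -> Cn k G -> Cn k (fun x => F x * G x).
Proof.
  revert F G; induction k; intros F G HF HG.
  - simpl in *. intros x; apply (continuous_mult F G); auto.
  - pose proof (Cn_down _ _ HF) as HF'. pose proof (Cn_down _ _ HG) as HG'.
    destruct HF as [HF1 HF2], HG as [HG1 HG2]. split.
    + intros x; apply (ex_derive_mult F G); auto.
    + apply Cn_ext with (fun x => Derive F x * G x + F x * Derive G x).
      intros x; rewrite Derive_mult; auto. apply Cn_plus; apply IHk; auto.
Qed.

Lemma Cn_comp k F G : Cn k F -> Cn k G -> Cn k (fun x => F (G x)).
Proof.
  revert F G; induction k; intros F G HF HG.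
  - simpl in *. intros x. apply continuous_comp; auto.
  - pose proof (Cn_down _ _ HF) as HF'. pose proof (Cn_down _ _ HG) as HG'.
    destruct HF as [HF1 HF2], HG as [HG1 HG2]. split.
    + intros x; apply (ex_derive_comp F G); auto.
    + apply Cn_ext with (fun x => Derive G x * Derive F (G x)).
      intros x; rewrite (Derive_comp F G x); auto. apply Cn_mult; auto.
Qed.

Lemma Cn_scal k c F : Cn k F -> Cn k (fun x => c * F x).
Proof. intros; apply Cn_mult; auto using Cn_const. Qed.

Lemma Cn_minus k F G : Cn k F -> Cn k G -> Cn k (fun x => F x - G x).
Proof.
  intros HF HG. apply Cn_ext with (fun x => F x + (-1) * G x).
  intros; ring. apply Cn_plus; auto. apply Cn_scal; auto.
Qed.

Lemma Cn_sincos k : Cn k sin /\ Cn k cos.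
Proof.
  induction k; simpl.
  - split; intros x; apply continuity_pt_filterlim;
      [apply continuity_sin | apply continuity_cos].
  - destruct IHk as [Hs Hc]. split; split.
    + intros; auto_derive; auto.
    + apply Cn_ext with cos. intros x. symmetry. apply is_derive_unique. apply is_derive_sin. auto.
    + intros; auto_derive; auto.
    + apply Cn_ext with (fun x => -1 * sin x). intros x. symmetry.
      rewrite (is_derive_unique _ _ _ (is_derive_cos x)). ring.
      apply Cn_scal; auto.
Qed.

Lemma Derive_n_Derive F m x : Derive_n (Derive F) m x = Derive_n F (S m) x.
Proof.
  pose proof (Derive_n_comp F m 1 x). simpl in H. rewrite Nat.add_1_r in H. exact H.
Qed.


Lemma Derive_n_DeriveF F m : Derive_n (Derive F) m = Derive_n F (S m).
Proof.
  apply functional_extensionality => x.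
  pose proof (Derive_n_comp F m 1 x). simpl in H. rewrite Nat.add_1_r in H. exact H.
Qed.

Lemma Ck_Cn k F : Ck_real k F -> Cn k F.
Proof.
  revert F; induction k => F H.
  - simpl => x. by case: (H 0%nat (le_n _) x).
  - split.
    + move=> x. by case: (H 1%nat ltac:(lia) x).
    + apply IHk => m Hm x. split.
      * destruct m as [|m']. simpl; auto.
        simpl. rewrite Derive_n_DeriveF.
        by case: (H (S (S m')) ltac:(lia) x).
      * rewrite Derive_n_DeriveF. by case: (H (S m) ltac:(lia) x).
Qed.

Lemma Cn_Ck k F : Cn k F -> Ck_real k F.
Proof.
  revert F; induction k => F H m Hm x.
  - assert (m = 0%nat) by lia; subst. split. simpl; auto. apply H.
  - destruct H as [H1 H2]. pose proof (IHk _ H2) as IH.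
    destruct m as [|m'].
    + split. simpl; auto. apply Cn_cont with (S k). split; auto.
    + split.
      * destruct m' as [|m'']. simpl. apply H1.
        change (ex_derive (Derive_n F (S m'')) x).
        rewrite -Derive_n_DeriveF. by case: (IH (S m'') ltac:(lia) x).
      * rewrite -Derive_n_DeriveF. by case: (IH m' ltac:(lia) x).
Qed.

Definition Cs' (s : smoothness) (F : R -> R) : Prop :=
  match s with Fin k => Cn k F | Inf => forall k, Cn k F end.

Lemma Cs_iff s F : Cs_real s F <-> Cs' s F.
Proof.
  destruct s; simpl; split.
  - apply Ck_Cn. - apply Cn_Ck.
  - move=> H k; apply Ck_Cn, H. - move=> H k; apply Cn_Ck, H.
Qed.

Lemma Cs_ext s F G : (forall x, F x = G x) -> Cs' s F -> Cs' s G.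
Proof. destruct s; simpl; intros; [eapply Cn_ext|intros; eapply Cn_ext]; eauto. Qed.
Lemma Cs_plus s F G : Cs' s F -> Cs' s G -> Cs' s (fun x => F x + G x).
Proof. destruct s; simpl; intros; auto using Cn_plus. Qed.
Lemma Cs_mult s F G : Cs' s F -> Cs' s G -> Cs' s (fun x => F x * G x).
Proof. destruct s; simpl; intros; auto using Cn_mult. Qed.
Lemma Cs_comp s F G : Cs' s F -> Cs' s G -> Cs' s (fun x => F (G x)).
Proof. destruct s; simpl; intros; auto using Cn_comp. Qed.
Lemma Cs_minus s F G : Cs' s F -> Cs' s G -> Cs' s (fun x => F x - G x).
Proof. destruct s; simpl; intros; auto using Cn_minus. Qed.
Lemma Cs_scal s c F : Cs' s F -> Cs' s (fun x => c * F x).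
Proof. destruct s; simpl; intros; auto using Cn_scal. Qed.
Lemma Cs_inf s F : (forall k, Cn k F) -> Cs' s F.
Proof. destruct s; simpl; auto. Qed.
Lemma Cs_const s c : Cs' s (fun _ => c).
Proof. apply Cs_inf => k; apply Cn_const. Qed.
Lemma Cs_id s : Cs' s (fun x => x).
Proof. apply Cs_inf => k; apply Cn_id. Qed.
Lemma Cs_sin s : Cs' s sin.
Proof. apply Cs_inf => k; apply Cn_sincos. Qed.
Lemma Cs_cos s : Cs' s cos.
Proof. apply Cs_inf => k; apply Cn_sincos. Qed.

Lemma Cs_C1 s F : smooth_ge1 s -> Cs' s F ->
  (forall x, ex_derive F x) /\ (forall x, continuous (Derive F) x).
Proof.
  intros Hs H. assert (H1 : Cn 1 F).
  { destruct s; simpl in Hs, H. apply Cn_le with k; auto. apply H. }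
  destruct H1 as [H1 H2]. split; auto.
Qed.

Lemma locally_R x (P : R -> Prop) e : 0 < e ->
  (forall y, Rabs (y - x) < e -> P y) -> locally x P.
Proof.
  move=> He H. exists (mkposreal e He) => y Hy. apply H. exact Hy.
Qed.

Lemma locally_R_inv x (P : R -> Prop) : locally x P ->
  exists e, 0 < e /\ forall y, Rabs (y - x) < e -> P y.
Proof.
  case=> [[e He]] H. exists e; split; first by []. move=> y Hy; apply H; exact Hy.
Qed.

Inductive ispoly : (R -> R) -> Prop :=
| ip_const c : ispoly (fun _ => c)
| ip_id : ispoly (fun y => y)
| ip_plus P Q : ispoly P -> ispoly Q -> ispoly (fun y => P y + Q y)
| ip_mult P Q : ispoly P -> ispoly Q -> ispoly (fun y => P y * Q y).

Lemma ispoly_deriv P : ispoly P ->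
  exists P', ispoly P' /\ forall y, is_derive P y (P' y).
Proof.
  induction 1.
  - exists (fun _ => 0); split. constructor. move=> y; apply: is_derive_const.
  - exists (fun _ => 1); split. constructor. move=> y; apply: is_derive_id.
  - case: IHispoly1 => [P' [H1 H2]]; case: IHispoly2 => [Q' [H3 H4]].
    exists (fun y => P' y + Q' y); split. by constructor.
    move=> y. apply: is_derive_plus; auto.
  - case: IHispoly1 => [P' [H1 H2]]; case: IHispoly2 => [Q' [H3 H4]].
    exists (fun y => P' y * Q y + P y * Q' y); split. constructor; by constructor.
    move=> y. apply: (is_derive_mult P Q); auto. move=> a b; apply Rmult_comm.
Qed.

Lemma ispoly_bound P : ispoly P ->
  exists C m, 0 <= C /\ forall y, 1 <= y -> Rabs (P y) <= C * y ^ m.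
Proof.
  induction 1.
  - exists (Rabs c), 0%nat; split. apply Rabs_pos. move=> y Hy /=; lra.
  - exists 1, 1%nat; split. lra. move=> y Hy /=. rewrite Rabs_right; lra.
  - case: IHispoly1 => [C1 [m1 [HC1 H1]]]; case: IHispoly2 => [C2 [m2 [HC2 H2]]].
    exists (C1 + C2), (m1 + m2)%nat; split. lra. move=> y Hy.
    have E1: y ^ m1 <= y ^ (m1 + m2) by apply Rle_pow; lia || lra.
    have E2: y ^ m2 <= y ^ (m1 + m2) by apply Rle_pow; lia || lra.
    have := H1 y Hy; have := H2 y Hy; have := Rabs_triang (P y) (Q y). nra.
  - case: IHispoly1 => [C1 [m1 [HC1 H1]]]; case: IHispoly2 => [C2 [m2 [HC2 H2]]].
    exists (C1 * C2), (m1 + m2)%nat; split. nra. move=> y Hy.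
    rewrite Rabs_mult pow_add.
    have := H1 y Hy; have := H2 y Hy.
    have := Rabs_pos (P y); have := Rabs_pos (Q y). nra.
Qed.

Lemma exp_pow_n (n : nat) x : exp x ^ n = exp (INR n * x).
Proof.
  induction n. simpl. rewrite Rmult_0_l exp_0 //.
  rewrite S_INR /= IHn -exp_plus. f_equal. ring.
Qed.

Lemma pow_exp_bound m : exists K, 0 < K /\ forall y, 0 <= y -> y ^ m <= K * exp y.
Proof.
  destruct m as [|p].
  - exists 1; split. lra. move=> y Hy /=. have := exp_ineq1_le y. lra.
  - set q := INR (S p). have Hq : 0 < q by apply lt_0_INR; lia.
    exists (q ^ S p); split. apply pow_lt; lra. move=> y Hy.
    have H1 : y / q <= exp (y / q) by have := exp_ineq1_le (y / q); lra.
    have H2 : (y / q) ^ S p <= exp (y / q) ^ S p.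
    { apply pow_incr. split; auto. apply Rdiv_le_0_compat; lra. }
    rewrite exp_pow_n -/q in H2. replace (q * (y / q)) with y in H2 by (field; lra).
    replace (y ^ S p) with (q ^ S p * (y / q) ^ S p).
    apply Rmult_le_compat_l; auto. apply pow_le; lra.
    rewrite -(Rpow_mult_distr q (y / q)). f_equal. field; lra.
Qed.

Definition psiP (P : R -> R) (x : R) : R :=
  match Rlt_dec 0 x with left _ => P (/ x) * exp (- / x) | right _ => 0 end.

Lemma psiP_small P : ispoly P ->
  exists C, 0 <= C /\ forall x, Rabs x <= 1 -> Rabs (psiP P x) <= C * x ^ 2.
Proof.
  move=> HP. case: (ispoly_bound P HP) => [C [m [HC H]]].
  case: (pow_exp_bound (m + 2)) => [K [HK HKb]].
  exists (C * K); split. nra. move=> x Hx. rewrite /psiP.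
  case: (Rlt_dec 0 x) => Hx0; last first.
  { rewrite Rabs_R0. apply Rmult_le_pos. nra. apply pow2_ge_0. }
  have Hy : 1 <= / x.
  { rewrite Rabs_right in Hx; try lra. rewrite -Rinv_1. apply Rinv_le_contravar; lra. }
  have E := H _ Hy. have E2 := HKb (/ x) ltac:(lra).
  rewrite pow_add in E2.
  have Hex : exp (- / x) * exp (/ x) = 1 by rewrite -exp_plus Rplus_opp_l exp_0.
  have Hepos := exp_pos (- / x). have Hepos2 := exp_pos (/ x).
  rewrite Rabs_mult (Rabs_right (exp _)); try lra.
  have Hxx : (/ x) ^ 2 * x ^ 2 = 1 by field; lra.
  have Hpm : 0 <= (/ x) ^ m by apply pow_le; lra.
  have Hp2 : 0 < x ^ 2 by apply pow_lt; lra.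
  have A : Rabs (P (/ x)) * exp (- / x) <= C * (/ x) ^ m * exp (- / x).
  { apply Rmult_le_compat_r; lra. }
  have B : (/ x) ^ m * exp (- / x) <= K * x ^ 2.
  { have HH : (/ x) ^ m * (/ x) ^ 2 * exp (- / x) <= K * exp (/ x) * exp (- / x).
    { apply Rmult_le_compat_r; lra. }
    replace (K * exp (/ x) * exp (- / x)) with (K * 1) in HH by (rewrite -Hex; ring).
    have : (/ x) ^ m * (/ x) ^ 2 * exp (- / x) * x ^ 2 <= K * 1 * x ^ 2.
    { apply Rmult_le_compat_r; lra. }
    replace ((/ x) ^ m * (/ x) ^ 2 * exp (- / x) * x ^ 2) with
      ((/ x) ^ m * exp (- / x) * ((/ x) ^ 2 * x ^ 2)) by ring.
    rewrite Hxx. lra. }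
  have : C * ((/ x) ^ m * exp (- / x)) <= C * (K * x ^ 2).
  { apply Rmult_le_compat_l; auto. }
  lra.
Qed.

Lemma psiP_pos_eq P x : 0 < x -> psiP P x = P (/ x) * exp (- / x).
Proof. move=> Hx. rewrite /psiP. by case: (Rlt_dec 0 x). Qed.
Lemma psiP_npos_eq P x : x <= 0 -> psiP P x = 0.
Proof. move=> Hx. rewrite /psiP. case: (Rlt_dec 0 x) => //; lra. Qed.

Lemma is_derive_val (f : R -> R) x l1 l2 : is_derive f x l1 -> l1 = l2 -> is_derive f x l2.
Proof. by move=> H <-. Qed.

Lemma psiP_deriv P : ispoly P ->
  exists Q, ispoly Q /\ forall x, is_derive (psiP P) x (psiP Q x).
Proof.
  move=> HP. case: (ispoly_deriv P HP) => [P' [HP' DP]].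
  exists (fun y => y * y * (P y + (-1) * P' y)); split.
  { apply ip_mult. apply ip_mult; apply ip_id. apply ip_plus; auto. apply ip_mult; auto. apply ip_const. }
  move=> x. case: (Rtotal_order x 0) => [Hx|[Hx|Hx]].
  - apply: (is_derive_ext_loc (fun _ => 0)).
    + apply locally_R with (- x). lra. move=> y Hy.
      rewrite psiP_npos_eq //. have := Rabs_def2 _ _ Hy. lra.
    + rewrite psiP_npos_eq; try lra. apply: is_derive_const.
  - subst x. apply is_derive_Reals. move=> eps Heps.
    case: (psiP_small P HP) => [C [HC HCb]].
    have Hd : 0 < Rmin 1 (eps / (C + 1)).
    { apply Rmin_pos. lra. apply Rdiv_lt_0_compat; lra. }
    exists (mkposreal _ Hd) => h Hh Hhd. simpl in Hhd.
    rewrite (psiP_npos_eq P 0) ?(psiP_npos_eq _ 0); try lra.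
    rewrite Rplus_0_l Rminus_0_r Rminus_0_r.
    have H1 : Rabs h <= 1. have := Rmin_l 1 (eps / (C + 1)). lra.
    have H2 : Rabs h < eps / (C + 1). have := Rmin_r 1 (eps / (C + 1)). lra.
    have B := HCb h H1.
    have Hh0 : 0 < Rabs h by apply Rabs_pos_lt.
    rewrite /Rdiv Rabs_mult Rabs_inv.
    have E : C * h ^ 2 = C * Rabs h * Rabs h.
    { rewrite -(pow2_abs h). ring. }
    rewrite E in B.
    have : Rabs (psiP P h) * / Rabs h <= C * Rabs h.
    { apply Rmult_le_reg_r with (Rabs h); auto.
      rewrite Rmult_assoc Rinv_l; lra. }
    have : C * Rabs h < eps.
    { have : C * Rabs h <= (C + 1) * Rabs h by nra.
      have : (C + 1) * Rabs h < (C + 1) * (eps / (C + 1)).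
      { apply Rmult_lt_compat_l; lra. }
      replace ((C + 1) * (eps / (C + 1))) with eps by (field; lra). lra. }
    lra.
  - have Dinv : is_derive (fun t => / t) x (- / x ^ 2).
    { auto_derive. lra. field. lra. }
    have D1 : is_derive (fun t => P (/ t)) x (scal (- / x ^ 2) (P' (/ x))).
    { apply: (is_derive_comp P (fun t => / t)); auto. }
    have D2 : is_derive (fun t => exp (- / t)) x (exp (- / x) * / x ^ 2).
    { auto_derive. lra. field. lra. }
    have D3 := is_derive_mult _ _ _ _ _ D1 D2 Rmult_comm.
    apply: (is_derive_ext_loc (fun t => P (/ t) * exp (- / t))).
    + apply locally_R with x. lra. move=> y Hy.
      rewrite psiP_pos_eq //. have := Rabs_def2 _ _ Hy. lra.
    + rewrite psiP_pos_eq //.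
      apply: (is_derive_val _ _ _ _ D3).
      rewrite /plus /mult /scal /=. rewrite /mult /=. field. lra.
Qed.

Lemma psiP_Cn k P : ispoly P -> Cn k (psiP P).
Proof.
  revert P; induction k => P HP; case: (psiP_deriv P HP) => [Q [HQ DQ]].
  - simpl => x. apply: (@ex_derive_continuous R_AbsRing R_NormedModule).
    eexists; apply DQ.
  - split. move=> x; eexists; apply DQ.
    apply Cn_ext with (psiP Q). move=> x. symmetry. apply is_derive_unique, DQ.
    by apply IHk.
Qed.

Definition psi := psiP (fun _ => 1).

Lemma psi_Cn k : Cn k psi.
Proof. apply psiP_Cn, ip_const. Qed.

Lemma psi_zero x : x <= 0 -> psi x = 0.
Proof. apply psiP_npos_eq. Qed.
Lemma psi_pos_eq x : 0 < x -> psi x = exp (- / x).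
Proof. move=> H. rewrite /psi psiP_pos_eq //. ring. Qed.
Lemma psi_pos x : 0 < x -> 0 < psi x.
Proof. move=> H. rewrite psi_pos_eq //. apply exp_pos. Qed.
Lemma psi_nonneg x : 0 <= psi x.
Proof. case: (Rle_lt_dec x 0) => H. rewrite psi_zero //; lra. have := psi_pos x H; lra. Qed.
Lemma psi_le1 x : psi x <= 1.
Proof.
  case: (Rle_lt_dec x 0) => H. rewrite psi_zero //; lra.
  rewrite psi_pos_eq // -exp_0. left; apply exp_increasing.
  have := Rinv_0_lt_compat x H. lra.
Qed.
Lemma psi_strict x y : 0 < y -> x < y -> psi x < psi y.
Proof.
  move=> Hy Hxy. case: (Rle_lt_dec x 0) => H.
  rewrite psi_zero //; by apply psi_pos.
  rewrite !psi_pos_eq //. apply exp_increasing.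
  have := Rinv_lt_contravar x y ltac:(nra) Hxy. lra.
Qed.
Lemma psi_deriv_pos x : 0 < x -> 0 < Derive psi x.
Proof.
  move=> Hx.
  have D : is_derive (fun t => exp (- / t)) x (exp (- / x) * / x ^ 2).
  { auto_derive. lra. field. lra. }
  have D' : is_derive psi x (exp (- / x) * / x ^ 2).
  { apply: (is_derive_ext_loc (fun t => exp (- / t))); last exact D.
    apply locally_R with x. lra. move=> y Hy.
    rewrite psi_pos_eq //. have := Rabs_def2 _ _ Hy. lra. }
  rewrite (is_derive_unique _ _ _ D'). apply Rmult_lt_0_compat. apply exp_pos.
  apply Rinv_0_lt_compat, pow_lt; lra.
Qed.

Definition near01 (d y : R) : Prop := exists x, 0 <= x <= 1 /\ Rabs (y - x) < d.

Lemma near01_mono d d' y : d <= d' -> near01 d y -> near01 d' y.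
Proof. move=> H [x [Hx Hy]]. exists x; split; auto; lra. Qed.

Lemma near01_int d y : 0 < d -> -(d/2) <= y <= 1 + d/2 -> near01 d y.
Proof.
  move=> Hd Hy. case: (Rle_lt_dec y 0) => H0.
  exists 0; split. lra. rewrite Rabs_left1; lra.
  case: (Rle_lt_dec y 1) => H1.
  exists y; split. lra. rewrite Rminus_diag Rabs_R0; lra.
  exists 1; split. lra. rewrite Rabs_right; lra.
Qed.

Lemma UL (Q : R -> R -> Prop) :
  (forall x e e', 0 < e' <= e -> Q x e -> Q x e') ->
  (forall t, 0 <= t <= 1 -> exists e, 0 < e /\ forall y, Rabs (y - t) < 2 * e -> Q y e) ->
  exists d, 0 < d /\ forall y, near01 d y -> Q y d.
Proof.
  move=> Hmono Hloc.
  have H' : forall t, exists e : posreal, 0 <= t <= 1 -> forall y, Rabs (y - t) < 2 * e -> Q y e.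
  { move=> t. case: (classic (0 <= t <= 1)) => Ht.
    - case: (Hloc t Ht) => e [He H]. by exists (mkposreal e He).
    - exists (mkposreal 1 Rlt_0_1) => //. }
  pose delta := fun t => proj1_sig (constructive_indefinite_description _ (H' t)).
  have Hdelta : forall t, 0 <= t <= 1 -> forall y, Rabs (y - t) < 2 * delta t -> Q y (delta t).
  { move=> t. rewrite /delta. case: (constructive_indefinite_description _ (H' t)) => e He /=. exact He. }
  case: (compactness_value_1d 0 1 delta) => d Hd.
  exists d. split; first by apply cond_pos.
  move=> y [x [Hx Hyx]]. apply NNPP => Hn. apply (Hd x Hx) => [[t [Ht [H1 H2]]]].
  apply Hn. apply (Hmono y (delta t)). split; auto. apply cond_pos.
  apply Hdelta; auto.
  have := Rabs_triang (y - x) (x - t). replace (y - x + (x - t)) with (y - t) by ring. lra.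
Qed.

Lemma cont_eps (F : R -> R) x : continuous F x ->
  forall eps, 0 < eps -> exists d, 0 < d /\ forall y, Rabs (y - x) < d -> Rabs (F y - F x) < eps.
Proof.
  move=> Hc eps Heps.
  have Hc' : continuity_pt F x by apply continuity_pt_filterlim.
  case: (proj1 (continuity_pt_locally F x) Hc' (mkposreal eps Heps)) => [[d Hd] H].
  exists d; split; first done. move=> y Hy. apply (H y). exact Hy.
Qed.

Definition nrml {n} (x : Eucl n) (l : seq.seq 'I_n) : R :=
  seq.foldr Rmax 0 (seq.map (fun i => Rabs (x i)) l).
Definition nrm {n} (x : Eucl n) : R := nrml x (enum 'I_n).

Lemma nrml_ge {n} (x : Eucl n) (l : seq.seq 'I_n) i : i \in l -> Rabs (x i) <= nrml x l.
Proof.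
  elim: l => [|a l IH] //=. rewrite seq.in_cons => /orP [/eqP ->|H].
  rewrite /nrml /=. apply Rmax_l.
  rewrite /nrml /=. apply Rle_trans with (nrml x l). by apply IH. apply Rmax_r.
Qed.

Lemma nrm_ge {n} (x : Eucl n) i : Rabs (x i) <= nrm x.
Proof. apply nrml_ge. by rewrite mem_enum. Qed.

Lemma nrm_nonneg {n} (x : Eucl n) : 0 <= nrm x.
Proof.
  rewrite /nrm /nrml. elim: (enum 'I_n) => [|a l IH] /=. lra.
  apply Rle_trans with (2 := Rmax_r _ _). exact IH.
Qed.

Lemma nrm_le {n} (x : Eucl n) c : 0 <= c -> (forall i, Rabs (x i) <= c) -> nrm x <= c.
Proof.
  move=> Hc H. rewrite /nrm /nrml. elim: (enum 'I_n) => [|a l IH] /=. lra.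
  apply Rmax_lub; auto.
Qed.

Lemma nrm_lt {n} (x : Eucl n) c : 0 < c -> (forall i, Rabs (x i) < c) -> nrm x < c.
Proof.
  move=> Hc H. rewrite /nrm /nrml. elim: (enum 'I_n) => [|a l IH] /=. lra.
  apply Rmax_lub_lt; auto.
Qed.

Lemma nrm_big {n} (x : Eucl n) e : 0 < e -> e <= nrm x -> exists i, e <= Rabs (x i).
Proof.
  move=> He. rewrite /nrm /nrml. elim: (enum 'I_n) => [|a l IH] /=. lra.
  move=> H. case: (Rle_lt_dec e (Rabs (x a))) => H1. by exists a.
  apply IH. move: H. rewrite /Rmax. case: (Rle_dec _ _) => //. lra.
Qed.

Lemma nrm_triang {n} (x y : Eucl n) : nrm (fun i => x i + y i) <= nrm x + nrm y.
Proof.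
  apply nrm_le. have := nrm_nonneg x; have := nrm_nonneg y; lra.
  move=> i. have := Rabs_triang (x i) (y i); have := nrm_ge x i; have := nrm_ge y i. lra.
Qed.

Lemma nrm_scal {n} c (x : Eucl n) : nrm (fun i => c * x i) = Rabs c * nrm x.
Proof.
  apply Rle_antisym.
  - apply nrm_le. apply Rmult_le_pos; [apply Rabs_pos|apply nrm_nonneg].
    move=> i. rewrite Rabs_mult. apply Rmult_le_compat_l. apply Rabs_pos. apply nrm_ge.
  - case: (Req_dec c 0) => Hc.
    + subst. rewrite Rabs_R0 Rmult_0_l. apply nrm_nonneg.
    + have Hc' : 0 < Rabs c by apply Rabs_pos_lt.
      apply Rmult_le_reg_l with (/ Rabs c). by apply Rinv_0_lt_compat.
      rewrite -Rmult_assoc Rinv_l; try lra. rewrite Rmult_1_l.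
      apply nrm_le. apply Rmult_le_pos. left; by apply Rinv_0_lt_compat. apply nrm_nonneg.
      move=> i. apply Rmult_le_reg_l with (Rabs c); auto.
      rewrite -Rmult_assoc Rinv_r; try lra. rewrite Rmult_1_l -Rabs_mult.
      apply (nrm_ge (fun j => c * x j)).
Qed.

Lemma nrm_ext {n} (x y : Eucl n) : (forall i, x i = y i) -> nrm x = nrm y.
Proof. move=> H. f_equal. by apply functional_extensionality. Qed.

Lemma nrm_zero {n} (x : Eucl n) : nrm x <= 0 -> forall i, x i = 0.
Proof.
  move=> H i. have := nrm_ge x i. have := Rabs_pos (x i). move=> H1 H2.
  apply Rabs_eq_0. lra.
Qed.

Lemma fin_min {n} (P : 'I_n -> R -> Prop) :
  (forall i e e', 0 < e' <= e -> P i e -> P i e') ->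
  (forall i, exists e, 0 < e /\ P i e) -> exists e, 0 < e /\ forall i, P i e.
Proof.
  move=> Hm Hex.
  have : forall l : seq.seq 'I_n, exists e, 0 < e /\ forall i, i \in l -> P i e.
  { elim => [|a l [e [He IH]]]. exists 1; split => //; lra.
    case: (Hex a) => ea [Hea Ha]. exists (Rmin e ea); split. by apply Rmin_pos.
    move=> i. rewrite seq.in_cons => /orP [/eqP ->|Hi].
    apply (Hm a ea). split. by apply Rmin_pos. apply Rmin_r. done.
    apply (Hm i e). split. by apply Rmin_pos. apply Rmin_l. by apply IH. }
  case/(_ (enum 'I_n)) => e [He H]. exists e; split => // i. apply H. by rewrite mem_enum.
Qed.

Lemma nat_unbounded x : exists N : nat, x < INR N.
Proof.
  case: (archimed x) => H1 _.
  case: (Z_le_gt_dec 0 (up x)) => Hz.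
  - exists (Z.to_nat (up x)). rewrite INR_IZR_INZ Z2Nat.id //.
  - exists 0%nat. simpl. have : IZR (up x) <= -1. apply IZR_le; lia. lra.
Qed.

Lemma between_abs t u c : Rmin t u <= c <= Rmax t u -> Rabs (c - t) <= Rabs (u - t).
Proof.
  rewrite /Rmin /Rmax. case: (Rle_dec t u) => H [H1 H2];
  rewrite /Rabs; case: (Rcase_abs _); case: (Rcase_abs _); lra.
Qed.

Lemma mvt (F : R -> R) t u : (forall x, ex_derive F x) ->
  exists c, Rmin t u <= c <= Rmax t u /\ F u - F t = Derive F c * (u - t).
Proof.
  move=> HF. apply MVT_gen.
  - move=> x _. apply Derive_correct, HF.
  - move=> x _. apply continuity_pt_filterlim.
    apply: (@ex_derive_continuous R_AbsRing R_NormedModule). apply HF.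
Qed.

Lemma vcont {n} (F : R -> Eucl n) : (forall i x, continuous (fun t => F t i) x) ->
  forall x eps, 0 < eps -> exists d, 0 < d /\ forall y, Rabs (y - x) < d ->
    nrm (fun i => F y i - F x i) < eps.
Proof.
  move=> Hc x eps Heps.
  case: (fin_min (fun i d => forall y, Rabs (y - x) < d -> Rabs (F y i - F x i) < eps)).
  - move=> i e e' He H y Hy. apply H. lra.
  - move=> i. case: (cont_eps _ _ (Hc i x) eps Heps) => d [Hd H]. by exists d.
  - move=> d [Hd H]. exists d; split => // y Hy. apply nrm_lt => // i. by apply H.
Qed.

Lemma unif_cont (F : R -> R) : (forall x, continuous F x) ->
  forall eta, 0 < eta -> exists d, 0 < d /\ forall y, near01 d y ->
    forall y', Rabs (y' - y) < d -> Rabs (F y' - F y) < eta.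
Proof.
  move=> Hc eta Heta.
  apply (UL (fun y e => forall y', Rabs (y' - y) < e -> Rabs (F y' - F y) < eta)).
  - move=> x e e' He H y' Hy. apply H; lra.
  - move=> t Ht. case: (cont_eps F t (Hc t) (eta / 2)) => [|e0 [He0 H]]. lra.
    exists (e0 / 3); split. lra. move=> y Hy y' Hy'.
    have A := H y ltac:(lra). 
    have B := H y' ltac:(have := Rabs_triang (y' - y) (y - t); 
                        replace (y' - y + (y - t)) with (y' - t) by ring; lra).
    have := Rabs_triang (F y' - F t) (F t - F y). rewrite Rabs_minus_sym in A.
    replace (F y' - F t + (F t - F y)) with (F y' - F y) by ring. lra.
Qed.

Lemma unif_bound {n} (F : R -> Eucl n) : (forall i x, continuous (fun t => F t i) x) ->
  exists d M, 0 < d /\ 0 < M /\ forall y, near01 d y -> nrm (F y) <= M.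
Proof.
  move=> Hc.
  case: (fin_min (fun i e => forall y, near01 e y -> Rabs (F y i) <= / e)).
  - move=> i e e' He H y Hy. apply Rle_trans with (/ e). apply H.
    apply: near01_mono Hy. lra. apply Rinv_le_contravar; lra.
  - move=> i. case: (UL (fun y e => Rabs (F y i) <= / e)).
    + move=> x e e' He H. apply Rle_trans with (/ e) => //. apply Rinv_le_contravar; lra.
    + move=> t Ht. case: (cont_eps _ t (Hc i t) 1 Rlt_0_1) => e0 [He0 H].
      have Hp : 0 < Rabs (F t i) + 1 by have := Rabs_pos (F t i); lra.
      exists (Rmin (e0 / 2) (/ (Rabs (F t i) + 1))); split.
      apply Rmin_pos. lra. by apply Rinv_0_lt_compat.
      move=> y Hy. have Hm1 := Rmin_l (e0 / 2) (/ (Rabs (F t i) + 1)).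
      have Hm2 := Rmin_r (e0 / 2) (/ (Rabs (F t i) + 1)).
      have Hpos : 0 < Rmin (e0 / 2) (/ (Rabs (F t i) + 1)).
      { apply Rmin_pos. lra. by apply Rinv_0_lt_compat. }
      have A := H y ltac:(lra).
      have B : Rabs (F t i) + 1 <= / Rmin (e0 / 2) (/ (Rabs (F t i) + 1)).
      { rewrite -{1}(Rinv_inv (Rabs (F t i) + 1)). apply Rinv_le_contravar => //. }
      have := Rabs_triang_inv (F y i) (F t i). lra.
    + move=> d [Hd H]. exists d; split => //.
  - move=> d [Hd H]. exists d, (/ d); split => //; split. by apply Rinv_0_lt_compat.
    move=> y Hy. apply nrm_le. left; by apply Rinv_0_lt_compat. move=> i; by apply H.
Qed.

Lemma deriv_approx (F : R -> R) : (forall x, ex_derive F x) -> (forall x, continuous (Derive F) x) ->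
  forall eta, 0 < eta -> exists d, 0 < d /\ forall t u, near01 d t -> Rabs (u - t) < d ->
    Rabs (F u - F t - (u - t) * Derive F t) <= eta * Rabs (u - t).
Proof.
  move=> HF HF' eta Heta. case: (unif_cont _ HF' eta Heta) => d [Hd H].
  exists d; split => // t u Ht Hu. case: (mvt F t u HF) => c [Hc E].
  rewrite E. replace (Derive F c * (u - t) - (u - t) * Derive F t) with
    ((Derive F c - Derive F t) * (u - t)) by ring.
  rewrite Rabs_mult. apply Rmult_le_compat_r. apply Rabs_pos.
  left. apply H => //. have := between_abs _ _ _ Hc. lra.
Qed.

Lemma nrm_sym {n} (x y : Eucl n) : nrm (fun i => x i - y i) = nrm (fun i => y i - x i).
Proof.
  rewrite -(Rmult_1_l (nrm (fun i => y i - x i))) -Rabs_R1 -Rabs_Ropp -nrm_scal.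
  apply nrm_ext => i. ring.
Qed.

Lemma nrm_tri3 {n} (x y z : Eucl n) :
  nrm (fun i => x i - z i) <= nrm (fun i => x i - y i) + nrm (fun i => y i - z i).
Proof.
  have := nrm_triang (fun i => x i - y i) (fun i => y i - z i).
  by rewrite (nrm_ext (fun i => x i - y i + (y i - z i)) (fun i => x i - z i)) // => i; ring.
Qed.

Lemma coord_window {n} (v : R -> Eucl n) : (forall i x, continuous (fun t => v t i) x) ->
  (forall t, 0 <= t <= 1 -> exists i, v t i <> 0) ->
  exists d, 0 < d /\ forall y, near01 d y -> exists i, forall z, Rabs (z - y) < d -> d <= Rabs (v z i).
Proof.
  move=> Hc Hnz.
  apply (UL (fun y e => exists i, forall z, Rabs (z - y) < e -> e <= Rabs (v z i))).
  - move=> x e e' He [i H]. exists i => z Hz. have := H z ltac:(lra). lra.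
  - move=> t Ht. case: (Hnz t Ht) => i Hi.
    have Hc0 : 0 < Rabs (v t i) by apply Rabs_pos_lt.
    case: (cont_eps _ t (Hc i t) (Rabs (v t i) / 2)) => [|e0 [He0 H]]. lra.
    set e := Rmin (e0 / 3) (Rabs (v t i) / 2).
    have He1 := Rmin_l (e0 / 3) (Rabs (v t i) / 2).
    have He2 := Rmin_r (e0 / 3) (Rabs (v t i) / 2).
    have Hepos : 0 < e by apply Rmin_pos; lra.
    exists e; split => // y Hy. exists i => z Hz.
    have : Rabs (z - t) < e0.
    { have := Rabs_triang (z - y) (y - t). replace (z - y + (y - t)) with (z - t) by ring.
      rewrite -/e in He1. lra. }
    move/H => A. have := Rabs_triang_inv (v t i) (v z i). rewrite Rabs_minus_sym in A.
    rewrite -/e in He2. lra.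
Qed.

Lemma ball_O {n} (f : R -> Eucl n) (O : Eucl n -> Prop) :
  (forall i x, continuous (fun t => f t i) x) -> open_Rn O ->
  (forall t, 0 <= t <= 1 -> O (f t)) ->
  exists d, 0 < d /\ forall y, near01 d y -> forall q, nrm (fun i => q i - f y i) < d -> O q.
Proof.
  move=> Hc HO Hin.
  apply (UL (fun y e => forall q, nrm (fun i => q i - f y i) < e -> O q)).
  - move=> x e e' He H q Hq. apply H. lra.
  - move=> t Ht. case: (HO _ (Hin t Ht)) => eps [Heps Hb].
    case: (vcont f Hc t (eps / 2)) => [|e0 [He0 H]]. lra.
    exists (Rmin (e0 / 2) (eps / 2)); split. apply Rmin_pos; lra.
    move=> y Hy q Hq. apply Hb => i.
    have Hm1 := Rmin_l (e0 / 2) (eps / 2). have Hm2 := Rmin_r (e0 / 2) (eps / 2).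
    have A := H y ltac:(lra).
    have := nrm_tri3 q (f y) (f t). have := nrm_ge (fun i => q i - f t i) i. simpl. lra.
Qed.

Lemma sep_lemma {n} (f : R -> Eucl n) sigma : 0 < sigma ->
  (forall i x, continuous (fun t => f t i) x) ->
  (forall t1 t2, 0 <= t1 <= 1 -> 0 <= t2 <= 1 -> f t1 = f t2 -> t1 = t2) ->
  exists d, 0 < d /\ forall t, near01 d t -> forall u, near01 d u -> sigma <= Rabs (u - t) ->
    d <= nrm (fun i => f u i - f t i).
Proof.
  move=> Hs Hc Hinj.
  have inner : forall t0, 0 <= t0 <= 1 -> exists mu, 0 < mu /\ forall u, near01 mu u ->
      sigma / 2 <= Rabs (u - t0) -> mu <= nrm (fun i => f u i - f t0 i).
  { move=> t0 Ht0.
    apply (UL (fun u e => sigma / 2 <= Rabs (u - t0) -> e <= nrm (fun i => f u i - f t0 i))).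
    - move=> x e e' He H H'. have := H H'. lra.
    - move=> u0 Hu0. case: (Rlt_le_dec (Rabs (u0 - t0)) (sigma / 4)) => Hu.
      + exists (sigma / 8); split. lra. move=> y Hy H'. exfalso.
        have := Rabs_triang (y - u0) (u0 - t0). replace (y - u0 + (u0 - t0)) with (y - t0) by ring.
        lra.
      + have Hne : f u0 <> f t0.
        { move=> E. have := Hinj _ _ Hu0 Ht0 E. move=> E'. rewrite E' Rminus_diag Rabs_R0 in Hu. lra. }
        have [i Hi] : exists i, f u0 i <> f t0 i.
        { apply NNPP => Hn. apply Hne. apply functional_extensionality => i.
          apply NNPP => Hi. apply Hn. by exists i. }
        set c := nrm (fun i => f u0 i - f t0 i).
        have Hcpos : 0 < c.
        { apply Rlt_le_trans with (Rabs (f u0 i - f t0 i)). apply Rabs_pos_lt. lra.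
          apply (nrm_ge (fun i => f u0 i - f t0 i)). }
        case: (vcont f Hc u0 (c / 2)) => [|e0 [He0 H]]. lra.
        exists (Rmin (e0 / 2) (c / 2)); split. apply Rmin_pos; lra.
        move=> y Hy _. have Hm1 := Rmin_l (e0 / 2) (c / 2). have Hm2 := Rmin_r (e0 / 2) (c / 2).
        have A := H y ltac:(lra). rewrite nrm_sym in A.
        have := nrm_tri3 (f u0) (f y) (f t0). rewrite -/c. lra. }
  apply (UL (fun t e => forall u, near01 e u -> sigma <= Rabs (u - t) ->
                         e <= nrm (fun i => f u i - f t i))).
  - move=> x e e' He H u Hu H'. have := H u (near01_mono e' e u ltac:(lra) Hu) H'. lra.
  - move=> t0 Ht0. case: (inner t0 Ht0) => mu [Hmu Hin].
    case: (vcont f Hc t0 (mu / 2)) => [|e1 [He1 H1]]. lra.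
    set e := Rmin (sigma / 8) (Rmin (mu / 2) (e1 / 2)).
    have Hepos : 0 < e. apply Rmin_pos. lra. apply Rmin_pos; lra.
    have Ha := Rmin_l (sigma / 8) (Rmin (mu / 2) (e1 / 2)).
    have Hb := Rmin_r (sigma / 8) (Rmin (mu / 2) (e1 / 2)).
    have Hb1 := Rmin_l (mu / 2) (e1 / 2). have Hb2 := Rmin_r (mu / 2) (e1 / 2).
    rewrite -/e in Ha Hb.
    exists e; split => // t Ht u Hu Hut.
    have Hu' : near01 mu u by apply: near01_mono Hu; lra.
    have Hut0 : sigma / 2 <= Rabs (u - t0).
    { have := Rabs_triang_inv (u - t) (t0 - t). replace (u - t - (t0 - t)) with (u - t0) by ring.
      rewrite Rabs_minus_sym in Ht. lra. }
    have A := Hin u Hu' Hut0.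
    have B := H1 t ltac:(lra).
    have := nrm_tri3 (f u) (f t) (f t0). rewrite (nrm_sym (f u) (f t)). lra.
Qed.

Definition acur (dl th : R) : R := 1/2 + (1/2 + dl) * cos (2 * PI * th).
Definition bcur (dl th : R) : R := psi (sin (2 * PI * th) + dl / 2).

Lemma acur_range dl th : 0 < dl -> -dl <= acur dl th <= 1 + dl.
Proof. move=> H. rewrite /acur. have := COS_bound (2 * PI * th). nra. Qed.

Lemma bcur_range dl th : 0 <= bcur dl th <= 1.
Proof. rewrite /bcur. split; [apply psi_nonneg|apply psi_le1]. Qed.

Lemma acur_per dl th : acur dl (th + 1) = acur dl th.
Proof.
  rewrite /acur. replace (2 * PI * (th + 1)) with (2 * PI * th + 2 * PI) by ring.
  by rewrite cos_plus cos_2PI sin_2PI Rmult_0_r Rmult_1_r Rminus_0_r.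
Qed.
Lemma bcur_per dl th : bcur dl (th + 1) = bcur dl th.
Proof.
  rewrite /bcur. replace (2 * PI * (th + 1)) with (2 * PI * th + 2 * PI) by ring.
  by rewrite sin_plus cos_2PI sin_2PI Rmult_0_r Rmult_1_r Rplus_0_r.
Qed.

Lemma angle_eq x y : 0 <= x < 2 * PI -> 0 <= y < 2 * PI -> sin x = sin y -> cos x = cos y -> x = y.
Proof.
  move=> Hx Hy Hs Hc.
  have H1 : cos (x - y) = 1.
  { rewrite cos_minus Hs Hc. have := sin2_cos2 y. rewrite /Rsqr. lra. }
  have H2 : sin ((x - y) / 2) = 0.
  { have := cos_2a_sin ((x - y) / 2). replace (2 * ((x - y) / 2)) with (x - y) by field.
    rewrite H1 => E. nra. }
  case: (sin_eq_0_0 _ H2) => k Hk.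
  have HP := PI_RGT_0.
  have Hk1 : -1 < IZR k < 1.
  { split.
    - apply Rmult_lt_reg_r with PI => //. rewrite -Hk. lra.
    - apply Rmult_lt_reg_r with PI => //. rewrite -Hk. lra. }
  case: Hk1 => Ha Hb. apply lt_IZR in Ha. apply lt_IZR in Hb.
  have : k = 0%Z by lia. move=> E. rewrite E Rmult_0_l in Hk. lra.
Qed.

Lemma curve_inj dl th1 th2 : 0 < dl -> 0 <= th1 < 1 -> 0 <= th2 < 1 ->
  acur dl th1 = acur dl th2 -> bcur dl th1 = bcur dl th2 -> th1 = th2.
Proof.
  move=> Hd H1 H2 Ea Eb. have HP := PI_RGT_0.
  set x := 2 * PI * th1. set y := 2 * PI * th2.
  have Hx : 0 <= x < 2 * PI by rewrite /x; nra.
  have Hy : 0 <= y < 2 * PI by rewrite /y; nra.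
  have Ec : cos x = cos y.
  { rewrite /acur -/x -/y in Ea. have : (1/2 + dl) * (cos x - cos y) = 0 by lra.
    case/Rmult_integral => E. lra. lra. }
  suff : x = y. rewrite /x /y => E. apply Rmult_eq_reg_l with (2 * PI). exact E. lra.
  rewrite /bcur -/x -/y in Eb.
  case: (Rle_lt_dec (sin x + dl / 2) 0) => Sx; case: (Rle_lt_dec (sin y + dl / 2) 0) => Sy.
  -
    have Px : PI < x. { apply Rnot_le_lt => Hle. have := sin_ge_0 x ltac:(lra) Hle. lra. }
    have Py : PI < y. { apply Rnot_le_lt => Hle. have := sin_ge_0 y ltac:(lra) Hle. lra. }
    case: (Rtotal_order x y) => [Hl|[Ee|Hl]] //.
    + have := cos_increasing_1 x y ltac:(lra) ltac:(lra) ltac:(lra) ltac:(lra) Hl. lra.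
    + have := cos_increasing_1 y x ltac:(lra) ltac:(lra) ltac:(lra) ltac:(lra) Hl. lra.
  - rewrite psi_zero // in Eb. have := psi_pos _ Sy. lra.
  - rewrite (psi_zero (sin y + dl / 2)) // in Eb. have := psi_pos _ Sx. lra.
  - apply angle_eq => //.
    case: (Rtotal_order (sin x) (sin y)) => [Hl|[Ee|Hl]] //.
    + have := psi_strict (sin x + dl / 2) (sin y + dl / 2) Sy ltac:(lra). lra.
    + have := psi_strict (sin y + dl / 2) (sin x + dl / 2) Sx ltac:(lra). lra.
Qed.

Lemma acur_deriv dl th : is_derive (acur dl) th (- (1/2 + dl) * (2 * PI) * sin (2 * PI * th)).
Proof. rewrite /acur. auto_derive => //. ring. Qed.

Lemma bcur_deriv dl th : is_derive (bcur dl) th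
   (Derive psi (sin (2 * PI * th) + dl / 2) * (2 * PI * cos (2 * PI * th))).
Proof.
  rewrite /bcur.
  have D1 : is_derive (fun t => sin (2 * PI * t) + dl / 2) th (2 * PI * cos (2 * PI * th)).
  { auto_derive => //. ring. }
  have D2 : is_derive psi (sin (2 * PI * th) + dl / 2) (Derive psi (sin (2 * PI * th) + dl / 2)).
  { apply Derive_correct. case: (psi_Cn 1) => H _. apply H. }
  have := is_derive_comp _ _ _ _ _ D2 D1. rewrite /scal /= /mult /=. move=> H.
  replace (Derive psi (sin (2 * PI * th) + dl / 2) * (2 * PI * cos (2 * PI * th))) with
    (2 * PI * cos (2 * PI * th) * Derive psi (sin (2 * PI * th) + dl / 2)) by ring. exact H.
Qed.

Lemma curve_reg dl th : 0 < dl ->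
  - (1/2 + dl) * (2 * PI) * sin (2 * PI * th) <> 0 \/
  Derive psi (sin (2 * PI * th) + dl / 2) * (2 * PI * cos (2 * PI * th)) <> 0.
Proof.
  move=> Hd. have HP := PI_RGT_0.
  case: (Req_dec (sin (2 * PI * th)) 0) => Hs.
  - right. rewrite Hs Rplus_0_l.
    have Hc : cos (2 * PI * th) <> 0.
    { move=> Hc. have := sin2_cos2 (2 * PI * th). rewrite Hs Hc /Rsqr. lra. }
    have := psi_deriv_pos (dl / 2) ltac:(lra).
    move=> Hp. apply Rmult_integral_contrapositive. split. lra.
    apply Rmult_integral_contrapositive. split; lra.
  - left. apply Rmult_integral_contrapositive. split => //.
    apply Rmult_integral_contrapositive. split; lra.
Qed.

Lemma curve_cover dl s0 : 0 < dl <= 1 -> 0 <= s0 <= 1 ->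
  exists th, acur dl th = s0 /\ bcur dl th = 0.
Proof.
  move=> Hd Hs. have HP := PI_RGT_0.
  set c := (s0 - 1/2) / (1/2 + dl).
  have Hc1 : -1 <= c <= 1.
  { rewrite /c. split.
    - apply Rmult_le_reg_r with (1/2 + dl). lra. field_simplify; lra.
    - apply Rmult_le_reg_r with (1/2 + dl). lra. field_simplify; lra. }
  case: (IVT_cor (fun x => cos x - c) PI (2 * PI)).
  - apply continuity_minus. apply continuity_cos. apply continuity_const. by move=> ??.
  - lra.
  - rewrite cos_PI cos_2PI. nra.
  - move=> x [Hx Ex]. exists (x / (2 * PI)).
    have Ex' : 2 * PI * (x / (2 * PI)) = x by field; lra.
    rewrite /acur /bcur Ex'. split.
    + have : cos x = c by lra. move=> ->. rewrite /c. field. lra.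
    + apply psi_zero.
      have Hsx : sin x <= 0 by apply sin_le_0; lra.
      have Hsq : sin x * sin x = 1 - c * c.
      { have := sin2_cos2 x. rewrite /Rsqr. have : cos x = c by lra. move=> ->. lra. }
      have Hcc : c * c <= 1 / 4 / ((1/2 + dl) * (1/2 + dl)).
      { rewrite /c. have H2 : (s0 - 1/2) * (s0 - 1/2) <= 1/4 by nra.
        have Hp : 0 < (1/2 + dl) * (1/2 + dl) by nra.
        replace ((s0 - 1 / 2) / (1 / 2 + dl) * ((s0 - 1 / 2) / (1 / 2 + dl))) with
          ((s0 - 1/2) * (s0 - 1/2) / ((1/2 + dl) * (1/2 + dl))) by (field; lra).
        apply Rmult_le_compat_r. left; by apply Rinv_0_lt_compat. lra. }
      have Hk : dl / 2 * (dl / 2) + 1 / 4 / ((1/2 + dl) * (1/2 + dl)) <= 1.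
      { have Hp : 0 < (1/2 + dl) * (1/2 + dl) by nra.
        apply Rmult_le_reg_r with ((1/2 + dl) * (1/2 + dl)) => //.
        rewrite Rmult_plus_distr_r.
        replace (1 / 4 / ((1 / 2 + dl) * (1 / 2 + dl)) * ((1 / 2 + dl) * (1 / 2 + dl))) with (1/4)
          by (field; lra).
        have : 0 <= dl * dl * dl by nra.
        have : 0 <= dl * dl * dl * dl by nra.
        nra. }
      have : dl / 2 * (dl / 2) <= sin x * sin x by lra.
      nra.
Qed.

Lemma acur_Cn dl k : Cn k (acur dl).
Proof.
  rewrite /acur. apply Cn_plus. apply Cn_const. apply Cn_scal.
  apply Cn_comp. apply Cn_sincos. apply Cn_scal. apply Cn_id.
Qed.

Lemma bcur_Cn dl k : Cn k (bcur dl).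
Proof.
  rewrite /bcur. apply Cn_comp. apply psi_Cn. apply Cn_plus. apply Cn_comp.
  apply Cn_sincos. apply Cn_scal. apply Cn_id. apply Cn_const.
Qed.

Lemma Cs_cont s F : smooth_ge1 s -> Cs' s F -> forall x, continuous F x.
Proof.
  move=> Hs H x. case: (Cs_C1 s F Hs H) => H1 _.
  apply: (@ex_derive_continuous R_AbsRing R_NormedModule). apply H1.
Qed.

Lemma vderiv_approx {n} (f : R -> Eucl n) :
  (forall i x, ex_derive (fun t => f t i) x) ->
  (forall i x, continuous (Derive (fun t => f t i)) x) ->
  forall eta, 0 < eta -> exists d, 0 < d /\ forall i t u, near01 d t -> Rabs (u - t) < d ->
    Rabs (f u i - f t i - (u - t) * Derive (fun t => f t i) t) <= eta * Rabs (u - t).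
Proof.
  move=> H1 H2 eta Heta.
  case: (fin_min (fun i d => forall t u, near01 d t -> Rabs (u - t) < d ->
    Rabs (f u i - f t i - (u - t) * Derive (fun t => f t i) t) <= eta * Rabs (u - t))).
  - move=> i e e' He H t u Ht Hu. apply H. apply: near01_mono Ht; lra. lra.
  - move=> i. apply (deriv_approx (fun t => f t i) (H1 i) (H2 i) eta Heta).
  - move=> d [Hd H]. exists d; split; first done. move=> i. apply H.
Qed.

Lemma main_constr s n (f w : R -> Eucl n) (O : Eucl n -> Prop) :
  smooth_ge1 s ->
  (forall i, Cs' s (fun t => f t i)) ->
  (forall i, Cs' s (fun t => w t i)) ->
  (forall t1 t2, 0 <= t1 <= 1 -> 0 <= t2 <= 1 -> f t1 = f t2 -> t1 = t2) ->
  (forall t, 0 <= t <= 1 -> exists i, Derive (fun u => f u i) t <> 0) ->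
  open_Rn O -> (forall t, 0 <= t <= 1 -> O (f t)) ->
  (exists ka d0, 0 < ka /\ 0 < d0 /\ forall t, near01 d0 t -> forall al be,
      ka * Rabs al <= nrm (fun i => al * Derive (fun u => f u i) t + be * w t i) /\
      ka * Rabs be <= nrm (fun i => al * Derive (fun u => f u i) t + be * w t i)) ->
  exists G : Eucl n -> Prop, is_simple_closed_curve s G /\
    (forall t, 0 <= t <= 1 -> G (f t)) /\ (forall p, G p -> O p).
Proof.
  move=> Hs Hf Hw Hinj Hnz HO HfO [ka [d0 [Hka [Hd0 Htr]]]].
  have Hfd : forall i x, ex_derive (fun t => f t i) x.
  { move=> i. apply (Cs_C1 s _ Hs (Hf i)). }
  have Hfd' : forall i x, continuous (Derive (fun t => f t i)) x.
  { move=> i. apply (Cs_C1 s _ Hs (Hf i)). }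
  have Hwd : forall i x, ex_derive (fun t => w t i) x.
  { move=> i. apply (Cs_C1 s _ Hs (Hw i)). }
  have Hwd' : forall i x, continuous (Derive (fun t => w t i)) x.
  { move=> i. apply (Cs_C1 s _ Hs (Hw i)). }
  have Hfc : forall i x, continuous (fun t => f t i) x.
  { move=> i. apply (Cs_cont s _ Hs (Hf i)). }
  have Hwc : forall i x, continuous (fun t => w t i) x.
  { move=> i. apply (Cs_cont s _ Hs (Hw i)). }
  case: (coord_window (fun t i => Derive (fun u => f u i) t) Hfd' Hnz) => d1 [Hd1 U1].
  case: (ball_O f O Hfc HO HfO) => d2 [Hd2 U2].
  case: (sep_lemma f d1 Hd1 Hfc Hinj) => d3 [Hd3 U3].
  case: (vderiv_approx f Hfd Hfd' (ka / 4)) => [|dA [HdA UA]]. lra.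
  case: (unif_bound w Hwc) => dB [W [HdB [HW UB]]].
  case: (unif_bound (fun t i => Derive (fun u => w u i) t) Hwd') => dB' [W' [HdB' [HW' UB']]].
  set D := Rmin (Rmin (Rmin d0 d1) (Rmin d2 d3)) (Rmin dA (Rmin dB dB')).
  have HD : 0 < D.
  { repeat apply Rmin_pos => //. }
  have HD0 : D <= d0 /\ D <= d1 /\ D <= d2 /\ D <= d3 /\ D <= dA /\ D <= dB /\ D <= dB'.
  { rewrite /D.
    have := Rmin_l (Rmin (Rmin d0 d1) (Rmin d2 d3)) (Rmin dA (Rmin dB dB')).
    have := Rmin_r (Rmin (Rmin d0 d1) (Rmin d2 d3)) (Rmin dA (Rmin dB dB')).
    have := Rmin_l (Rmin d0 d1) (Rmin d2 d3). have := Rmin_r (Rmin d0 d1) (Rmin d2 d3).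
    have := Rmin_l d0 d1. have := Rmin_r d0 d1. have := Rmin_l d2 d3. have := Rmin_r d2 d3.
    have := Rmin_l dA (Rmin dB dB'). have := Rmin_r dA (Rmin dB dB').
    have := Rmin_l dB dB'. have := Rmin_r dB dB'. lra. }
  set dl := Rmin 1 (D / 2).
  have Hdl : 0 < dl /\ dl <= 1 /\ dl <= D / 2.
  { rewrite /dl. split. apply Rmin_pos; lra. split. apply Rmin_l. apply Rmin_r. }
  have HI : forall X y, D <= X -> -dl <= y <= 1 + dl -> near01 X y.
  { move=> X y HX Hy. apply near01_int. lra. lra. }
  set eps := Rmin (ka / (4 * W')) (Rmin (d3 / (4 * W)) (Rmin (d1 * dA / (4 * W)) (d2 / (2 * W)))).
  have Heps : 0 < eps.
  { rewrite /eps. repeat apply Rmin_pos; apply Rdiv_lt_0_compat; nra. }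
  have He1 : eps * W' <= ka / 4.
  { have : eps <= ka / (4 * W') by apply Rmin_l.
    move=> H. apply Rmult_le_reg_r with (/ W'). by apply Rinv_0_lt_compat.
    rewrite Rmult_assoc Rinv_r. 2: lra. rewrite Rmult_1_r.
    apply Rle_trans with (1 := H). right. field. lra. }
  have Hm : forall a b c d : R, Rmin a (Rmin b (Rmin c d)) <= b /\ Rmin a (Rmin b (Rmin c d)) <= c
       /\ Rmin a (Rmin b (Rmin c d)) <= d.
  { move=> a b c d.
    have := Rmin_l a (Rmin b (Rmin c d)). have := Rmin_r a (Rmin b (Rmin c d)).
    have := Rmin_l b (Rmin c d). have := Rmin_r b (Rmin c d).
    have := Rmin_l c d. have := Rmin_r c d. lra. }
  have He2 : 2 * eps * W < d3.
  { have H : eps <= d3 / (4 * W) by apply (Hm _ _ _ _).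
    have : eps * W <= d3 / 4.
    { apply Rle_trans with (d3 / (4 * W) * W). apply Rmult_le_compat_r; lra. right; field; lra. }
    lra. }
  have He3 : 2 * eps * W < d1 * dA.
  { have H : eps <= d1 * dA / (4 * W) by apply (Hm _ _ _ _).
    have : eps * W <= d1 * dA / 4.
    { apply Rle_trans with (d1 * dA / (4 * W) * W). apply Rmult_le_compat_r; lra. right; field; lra. }
    have : 0 < d1 * dA by nra. lra. }
  have He4 : eps * W < d2.
  { have H : eps <= d2 / (2 * W) by apply (Hm _ _ _ _).
    have : eps * W <= d2 / 2.
    { apply Rle_trans with (d2 / (2 * W) * W). apply Rmult_le_compat_r; lra. right; field; lra. }
    lra. }
  case: HD0 => [HD0 [HD1 [HD2 [HD3 [HDA [HDB HDB']]]]]].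
  have tube : forall t u r r', -dl <= t <= 1 + dl -> -dl <= u <= 1 + dl ->
      0 <= r <= 1 -> 0 <= r' <= 1 ->
      (forall i, f t i + eps * r * w t i = f u i + eps * r' * w u i) -> t = u /\ r = r'.
  { move=> t u r r' Ht Hu Hr Hr' E.
    have Ediff : forall i, f u i - f t i = eps * r * w t i - eps * r' * w u i.
    { move=> i. have := E i. lra. }
    have Hnf : nrm (fun i => f u i - f t i) <= 2 * eps * W.
    { apply nrm_le. nra. move=> i. rewrite Ediff.
      have := nrm_ge (w t) i. have := nrm_ge (w u) i.
      have := UB t (HI _ _ HDB Ht). have := UB u (HI _ _ HDB Hu).
      have := Rabs_triang (eps * r * w t i) (- (eps * r' * w u i)).
      rewrite Rabs_Ropp !Rabs_mult (Rabs_right eps) ?(Rabs_right r) ?(Rabs_right r'); try lra.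
      move=> H1 H2 H3 H4 H5.
      have : r * Rabs (w t i) <= 1 * W. apply Rmult_le_compat; try lra. apply Rabs_pos.
      have : r' * Rabs (w u i) <= 1 * W. apply Rmult_le_compat; try lra. apply Rabs_pos.
      move=> H6 H7. replace (eps * r * w t i - eps * r' * w u i) with
        (eps * r * w t i + - (eps * r' * w u i)) by ring. nra. }
    have Hclose : Rabs (u - t) < d1.
    { apply Rnot_le_lt => Hle.
      have := U3 t (HI _ _ HD3 Ht) u (HI _ _ HD3 Hu) Hle. lra. }
    have Hclose2 : Rabs (u - t) < dA.
    { case: (U1 t (HI _ _ HD1 Ht)) => i0 Hi0.
      case: (mvt (fun x => f x i0) t u (Hfd i0)) => c [Hc Ec].
      have Hcd := Hi0 c ltac:(have := between_abs _ _ _ Hc; lra).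
      have : d1 * Rabs (u - t) <= Rabs (f u i0 - f t i0).
      { rewrite Ec Rabs_mult. apply Rmult_le_compat_r => //. apply Rabs_pos. }
      have := nrm_ge (fun i => f u i - f t i) i0. move=> /= H1 H2.
      have : d1 * Rabs (u - t) < d1 * dA by lra.
      move=> H3. apply Rmult_lt_reg_l with d1 => //. }
    have Hwl : forall i, Rabs (w u i - w t i) <= W' * Rabs (u - t).
    { move=> i. case: (mvt (fun x => w x i) t u (Hwd i)) => c [Hc Ec].
      rewrite Ec Rabs_mult. apply Rmult_le_compat_r. apply Rabs_pos.
      have Hc' : -dl <= c <= 1 + dl.
      { move: Hc. rewrite /Rmin /Rmax. case: (Rle_dec t u) => _; lra. }
      have := UB' c (HI _ _ HDB' Hc'). have := nrm_ge (fun i => Derive (fun u => w u i) c) i.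
      simpl. lra. }
    have HX : nrm (fun i => (u - t) * Derive (fun u => f u i) t + (- (eps * (r - r'))) * w t i)
              <= ka / 2 * Rabs (u - t).
    { apply nrm_le. have := Rabs_pos (u - t). nra. move=> i.
      replace ((u - t) * Derive (fun u => f u i) t + - (eps * (r - r')) * w t i) with
        (- (f u i - f t i - (u - t) * Derive (fun t => f t i) t) + (- (eps * r') * (w u i - w t i))).
      2: { rewrite Ediff. ring. }
      have A1 := UA i t u (HI _ _ HDA Ht) Hclose2.
      have A2 := Hwl i.
      have := Rabs_triang (- (f u i - f t i - (u - t) * Derive (fun t => f t i) t))
                          (- (eps * r') * (w u i - w t i)).
      rewrite Rabs_Ropp Rabs_mult Rabs_Ropp Rabs_mult (Rabs_right eps) ?(Rabs_right r'); try lra.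
      move=> H.
      have : r' * Rabs (w u i - w t i) <= 1 * (W' * Rabs (u - t)).
      { apply Rmult_le_compat; try lra. apply Rabs_pos. }
      have := Rabs_pos (u - t). nra. }
    case: (Htr t (HI _ _ HD0 Ht) (u - t) (- (eps * (r - r')))) => T1 T2.
    have Hut : Rabs (u - t) = 0.
    { have := Rabs_pos (u - t). nra. }
    have Eut : u = t.
    { have := Rabs_pos (u - t). move: Hut. rewrite /Rabs. case: (Rcase_abs _); lra. }
    split. by rewrite Eut.
    rewrite Hut in HX. rewrite Rabs_Ropp Rabs_mult (Rabs_right eps) in T2; try lra.
    have : Rabs (r - r') = 0.
    { have H0 := Rabs_pos (r - r'). have H1 : 0 < ka * eps by nra.
      have H2 : ka * eps * Rabs (r - r') <= 0 by nra.
      apply Rle_antisym => //. apply Rmult_le_reg_l with (ka * eps) => //. lra. }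
    move: (Rabs_pos (r - r')). rewrite /Rabs. case: (Rcase_abs _); lra. }
  have Hacr : forall th, -dl <= acur dl th <= 1 + dl by move=> th; apply acur_range; lra.
  have Hbcr := bcur_range dl.
  set g := fun th i => f (acur dl th) i + eps * bcur dl th * w (acur dl th) i.
  exists (fun p => exists th, p = g th).
  split; [|split].
  - exists g. split; [|split; [|split; [|split]]].
    + move=> i. apply Cs_iff. rewrite /g. apply Cs_plus.
      apply: (Cs_comp s (fun x => f x i) (acur dl)) => //. apply Cs_inf => k; apply acur_Cn.
      apply: (Cs_mult s (fun x => eps * bcur dl x) (fun x => w (acur dl x) i)).
      apply Cs_scal. apply Cs_inf => k; apply bcur_Cn.
      apply: (Cs_comp s (fun x => w x i) (acur dl)) => //. apply Cs_inf => k; apply acur_Cn.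
    + move=> th. apply functional_extensionality => i. by rewrite /g acur_per bcur_per.
    + move=> t1 t2 H1 H2 E.
      have E' : forall i, g t1 i = g t2 i by move=> i; rewrite E.
      case: (tube (acur dl t1) (acur dl t2) (bcur dl t1) (bcur dl t2)) => //.
      move=> Ea Eb. apply curve_inj with dl => //. lra.
    + move=> th. apply NNPP => Hn.
      have Hz : forall i, Derive (fun u => g u i) th = 0.
      { move=> i. apply NNPP => Hi. apply Hn. by exists i. }
      set t := acur dl th. set r := bcur dl th.
      set A := - (1/2 + dl) * (2 * PI) * sin (2 * PI * th).
      set B := Derive psi (sin (2 * PI * th) + dl / 2) * (2 * PI * cos (2 * PI * th)).
      have Dg : forall i, is_derive (fun u => g u i) th
          (A * Derive (fun u => f u i) t + (eps * B * w t i + eps * r * (A * Derive (fun u => w u i) t))).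
      { move=> i.
        have D1 : is_derive (fun u => f (acur dl u) i) th (A * Derive (fun u => f u i) t).
        { have := is_derive_comp (fun x => f x i) (acur dl) th _ _
            (Derive_correct _ _ (Hfd i (acur dl th))) (acur_deriv dl th). done. }
        have D2 : is_derive (fun u => w (acur dl u) i) th (A * Derive (fun u => w u i) t).
        { have := is_derive_comp (fun x => w x i) (acur dl) th _ _
            (Derive_correct _ _ (Hwd i (acur dl th))) (acur_deriv dl th). done. }
        have D3 : is_derive (fun u => eps * bcur dl u) th (eps * B).
        { have := is_derive_scal (bcur dl) th eps _ (bcur_deriv dl th). done. }
        have D4 := is_derive_mult _ _ _ _ _ D3 D2 Rmult_comm.
        have D5 := is_derive_plus _ _ _ _ _ D1 D4.
        apply: (is_derive_val _ _ _ _ D5). rewrite /plus /mult /=. rewrite /mult /=. reflexivity. }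
      have Hv : forall i, A * Derive (fun u => f u i) t + eps * B * w t i =
                          - (eps * r * A) * Derive (fun u => w u i) t.
      { move=> i. have := Hz i. rewrite (is_derive_unique _ _ _ (Dg i)). move=> H. lra. }
      have Hbnd : nrm (fun i => A * Derive (fun u => f u i) t + eps * B * w t i) <= eps * Rabs A * W'.
      { rewrite (nrm_ext _ _ Hv) nrm_scal. rewrite Rabs_Ropp (Rabs_mult (eps * r) A) (Rabs_mult eps r) (Rabs_right eps); try lra.
        have := UB' t (HI _ _ HDB' (Hacr th)). move=> H.
        have Hr : Rabs r <= 1. rewrite Rabs_right; have := Hbcr th; rewrite -/r; lra.
        have := Rabs_pos A. have := Rabs_pos r. have := nrm_nonneg (fun i => Derive (fun u => w u i) t).
        move=> H1 H2 H3.
        have : Rabs r * Rabs A * nrm (fun i => Derive (fun u => w u i) t) <= 1 * Rabs A * W'.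
        { apply Rmult_le_compat; nra. }
        move=> H4. have : eps * (Rabs r * Rabs A * nrm (fun i => Derive (fun u => w u i) t)) <= eps * (1 * Rabs A * W').
        { apply Rmult_le_compat_l; lra. }
        move=> H5. lra. }
      case: (Htr t (HI _ _ HD0 (Hacr th)) A (eps * B)) => T1 T2.
      have HA : A = 0.
      { have : ka * Rabs A <= ka / 4 * Rabs A.
        { apply Rle_trans with (1 := T1). apply Rle_trans with (1 := Hbnd).
          have := Rabs_pos A. nra. }
        have := Rabs_pos A. move=> H0 H. have : Rabs A = 0 by nra.
        move: H0. rewrite /Rabs. case: (Rcase_abs _); lra. }
      have HB : B = 0.
      { have HA0 : Rabs A = 0 by rewrite HA Rabs_R0.
        rewrite HA0 Rmult_0_r Rmult_0_l in Hbnd.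
        rewrite Rabs_mult (Rabs_right eps) in T2; try lra.
        have H0 := Rabs_pos B. have : Rabs B = 0.
        { apply Rle_antisym => //. apply Rmult_le_reg_l with (ka * eps). nra.
          rewrite Rmult_0_r. have : ka * (eps * Rabs B) <= 0 by lra. nra. }
        move: H0. rewrite /Rabs. case: (Rcase_abs _); lra. }
      case: (curve_reg dl th ltac:(lra)) => H. by apply H. by apply H.
    + move=> p; split => //.
  - move=> t Ht. case: (curve_cover dl t ltac:(lra) Ht) => th [Ea Eb].
    exists th. apply functional_extensionality => i. rewrite /g Ea Eb. ring.
  - move=> p [th ->]. apply (U2 (acur dl th) (HI _ _ HD2 (Hacr th))).
    apply Rle_lt_trans with (eps * W) => //.
    rewrite /g. rewrite (nrm_ext _ (fun i => (eps * bcur dl th) * w (acur dl th) i)).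
    2: move=> i; ring.
    rewrite nrm_scal Rabs_mult (Rabs_right eps) ?(Rabs_right (bcur dl th)); try (have := Hbcr th; lra).
    have := UB (acur dl th) (HI _ _ HDB (Hacr th)).
    have := Hbcr th. have := nrm_nonneg (w (acur dl th)). move=> H1 H2 H3.
    have : bcur dl th * nrm (w (acur dl th)) <= 1 * W by apply Rmult_le_compat; lra.
    nra.
Qed.

Lemma tr2_alg a b v0 v1 s0 s1 d : 0 < d -> (d <= Rabs v0 \/ d <= Rabs v1) ->
  Rabs (s0 - v0) <= d / 4 -> Rabs (s1 - v1) <= d / 4 ->
  forall N, Rabs (a * v0 - b * s1) <= N -> Rabs (a * v1 + b * s0) <= N ->
  d / 4 * Rabs a <= N /\ d / 4 * Rabs b <= N.
Proof.
  move=> Hd Hv He0 He1 N HN0 HN1.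
  set A := Rabs a. set B := Rabs b.
  have HA : 0 <= A by apply Rabs_pos. have HB : 0 <= B by apply Rabs_pos.
  have HN : 0 <= N by have := Rabs_pos (a * v0 - b * s1); lra.
  set M := N + B * (d / 4).
  have HY0 : Rabs (a * v0 - b * v1) <= M.
  { replace (a * v0 - b * v1) with ((a * v0 - b * s1) + b * (s1 - v1)) by ring.
    have := Rabs_triang (a * v0 - b * s1) (b * (s1 - v1)). rewrite Rabs_mult -/B.
    have : B * Rabs (s1 - v1) <= B * (d / 4) by apply Rmult_le_compat_l. rewrite /M; lra. }
  have HY1 : Rabs (a * v1 + b * v0) <= M.
  { replace (a * v1 + b * v0) with ((a * v1 + b * s0) + - (b * (s0 - v0))) by ring.
    have := Rabs_triang (a * v1 + b * s0) (- (b * (s0 - v0))). rewrite Rabs_Ropp Rabs_mult -/B.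
    have : B * Rabs (s0 - v0) <= B * (d / 4) by apply Rmult_le_compat_l. rewrite /M; lra. }
  have HM : 0 <= M by rewrite /M; nra.
  have Sq0 : (a * v0 - b * v1) ^ 2 <= M ^ 2.
  { rewrite -(pow2_abs (a * v0 - b * v1)). apply pow_incr. split => //. apply Rabs_pos. }
  have Sq1 : (a * v1 + b * v0) ^ 2 <= M ^ 2.
  { rewrite -(pow2_abs (a * v1 + b * v0)). apply pow_incr. split => //. apply Rabs_pos. }
  have Hvv : d ^ 2 <= v0 ^ 2 + v1 ^ 2.
  { case: Hv => Hv.
    - have : d ^ 2 <= Rabs v0 ^ 2 by apply pow_incr; lra. rewrite pow2_abs. nra.
    - have : d ^ 2 <= Rabs v1 ^ 2 by apply pow_incr; lra. rewrite pow2_abs. nra. }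
  have Hid : (a * v0 - b * v1) ^ 2 + (a * v1 + b * v0) ^ 2 = (a ^ 2 + b ^ 2) * (v0 ^ 2 + v1 ^ 2) by ring.
  have Hab : (A ^ 2 + B ^ 2) * d ^ 2 <= 2 * M ^ 2.
  { rewrite /A /B !pow2_abs. have : 0 <= a ^ 2 + b ^ 2 by nra. nra. }
  have HbB : d / 4 * B <= N.
  { apply Rnot_lt_le => Hlt.
    have HM2 : M < B * (d / 2) by rewrite /M; lra.
    have : M ^ 2 < (B * (d / 2)) ^ 2.
    { simpl; nra. }
    have : 0 <= A ^ 2 by nra. nra. }
  split => //.
  case: (Rle_lt_dec B A) => HBA.
  - apply Rnot_lt_le => Hlt.
    have HM2 : M < A * (d / 2) by rewrite /M; nra.
    have : M ^ 2 < (A * (d / 2)) ^ 2.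
    { simpl; nra. }
    have : 0 <= B ^ 2 by nra. nra.
  - nra.
Qed.

Lemma I2_cases (i : 'I_2) : i = ord0 \/ i = ord_max.
Proof.
  case: i => [[|[|m]] Hm]. left; by apply: ord_inj. right; by apply: ord_inj. done.
Qed.

Lemma shift_Cs s (F : R -> R) h : Cs' s F -> Cs' s (fun t => F (t + h)).
Proof.
  move=> H. apply: (Cs_comp s F (fun t => t + h)) => //. apply Cs_plus. apply Cs_id. apply Cs_const.
Qed.

Lemma secant_Cs s (F : R -> R) h c : Cs' s F -> Cs' s (fun t => c * (F (t + h) - F t)).
Proof. move=> H. apply Cs_scal. apply Cs_minus => //. by apply shift_Cs. Qed.

Definition Transverse s n (f w : R -> Eucl n) : Prop :=
  (forall i, Cs' s (fun t => w t i)) /\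
  exists ka d0, 0 < ka /\ 0 < d0 /\ forall t, near01 d0 t -> forall al be,
      ka * Rabs al <= nrm (fun i => al * Derive (fun u => f u i) t + be * w t i) /\
      ka * Rabs be <= nrm (fun i => al * Derive (fun u => f u i) t + be * w t i).

Lemma transverse2 s (f : R -> Eucl 2) : smooth_ge1 s -> (forall i, Cs' s (fun t => f t i)) ->
  (forall t, 0 <= t <= 1 -> exists i, Derive (fun u => f u i) t <> 0) ->
  exists w, Transverse s 2 f w.
Proof.
  move=> Hs Hf Hnz.
  have Hfd : forall i x, ex_derive (fun t => f t i) x.
  { move=> i. apply (Cs_C1 s _ Hs (Hf i)). }
  have Hfd' : forall i x, continuous (Derive (fun t => f t i)) x.
  { move=> i. apply (Cs_C1 s _ Hs (Hf i)). }
  case: (coord_window (fun t i => Derive (fun u => f u i) t) Hfd' Hnz) => d1 [Hd1 U1].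
  case: (vderiv_approx f Hfd Hfd' (d1 / 4)) => [|dA [HdA UA]]. lra.
  set h := dA / 2.
  pose w := fun t (i : 'I_2) => if i == ord0 then (- / h) * (f (t + h) ord_max - f t ord_max)
                                else (/ h) * (f (t + h) ord0 - f t ord0).
  exists w. split.
  { move=> i. rewrite /w. case: (i == ord0) => /=.
    - apply: (secant_Cs s (fun t => f t ord_max)). apply Hf.
    - apply: (secant_Cs s (fun t => f t ord0)). apply Hf. }
  exists (d1 / 4), (Rmin d1 dA). split. lra. split. by apply Rmin_pos.
  move=> t Ht al be.
  have Ht1 : near01 d1 t by apply: near01_mono Ht; apply Rmin_l.
  have HtA : near01 dA t by apply: near01_mono Ht; apply Rmin_r.
  have Hh : 0 < h by rewrite /h; lra.
  have Hsec : forall j, Rabs (/ h * (f (t + h) j - f t j) - Derive (fun u => f u j) t) <= d1 / 4.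
  { move=> j. have H := UA j t (t + h) HtA.
    replace (t + h - t) with h in H by ring. rewrite (Rabs_right h) in H; last by lra.
    have := H ltac:(rewrite /h; lra).
    replace (/ h * (f (t + h) j - f t j) - Derive (fun u => f u j) t) with
      (/ h * (f (t + h) j - f t j - h * Derive (fun t => f t j) t)) by (field; lra).
    rewrite Rabs_mult Rabs_inv (Rabs_right h); try lra.
    move=> H2. apply Rmult_le_reg_l with h => //. rewrite -Rmult_assoc Rinv_r; lra. }
  have Hv : d1 <= Rabs (Derive (fun u => f u ord0) t) \/ d1 <= Rabs (Derive (fun u => f u ord_max) t).
  { case: (U1 t Ht1) => i Hi. have := Hi t ltac:(rewrite Rminus_diag Rabs_R0; lra).
    case: (I2_cases i) => ->; auto. }
  set N := nrm (fun i => al * Derive (fun u => f u i) t + be * w t i).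
  have := tr2_alg al be _ _ _ _ d1 Hd1 Hv (Hsec ord0) (Hsec ord_max) N.
  move=> H. apply H.
  - have := nrm_ge (fun i => al * Derive (fun u => f u i) t + be * w t i) ord0.
    rewrite -/N /w /=. move=> H1. apply: Rle_trans H1. right. f_equal. ring.
  - have := nrm_ge (fun i => al * Derive (fun u => f u i) t + be * w t i) ord_max.
    rewrite -/N /w /=. move=> H1. apply: Rle_trans H1. right. f_equal.
Qed.

Lemma psi_mono x y : x <= y -> psi x <= psi y.
Proof.
  move=> H. case: (Rle_lt_dec y 0) => Hy.
  rewrite !psi_zero; lra.
  case: (Req_dec x y) => [->|Hne]. lra. left; apply psi_strict => //; lra.
Qed.

Lemma psi_ne0 x : psi x <> 0 -> 0 < x.
Proof. move=> H. apply Rnot_le_lt => Hx. apply H. by apply psi_zero. Qed.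

Lemma tr3_alg a b vi vj wj d1 V om N : 0 < d1 -> 0 < om -> 0 <= V ->
  d1 <= Rabs vi -> om <= wj -> Rabs vj <= V ->
  Rabs (a * vi) <= N -> Rabs (a * vj + b * wj) <= N ->
  let ka := Rmin d1 (om * d1 / (d1 + V)) in
  ka * Rabs a <= N /\ ka * Rabs b <= N.
Proof.
  move=> Hd Hom HV Hvi Hwj Hvj HN1 HN2 ka.
  have Hk1 : ka <= d1 by apply Rmin_l.
  have Hk2 : ka <= om * d1 / (d1 + V) by apply Rmin_r.
  have Hkp : 0 < ka. apply Rmin_pos => //. apply Rdiv_lt_0_compat; nra.
  have HA := Rabs_pos a. have HB := Rabs_pos b.
  have E1 : d1 * Rabs a <= N.
  { rewrite Rabs_mult in HN1. have : d1 * Rabs a <= Rabs vi * Rabs a by nra. lra. }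
  split. nra.
  have E2 : Rabs b * om - Rabs a * V <= N.
  { have := Rabs_triang_inv (b * wj) (- (a * vj)). rewrite Rabs_Ropp.
    replace (b * wj - - (a * vj)) with (a * vj + b * wj) by ring.
    rewrite !Rabs_mult (Rabs_right wj); try lra.
    have : Rabs a * Rabs vj <= Rabs a * V by apply Rmult_le_compat_l. nra. }
  have E3 : Rabs b * om * d1 <= N * (d1 + V).
  { have : Rabs a * V * d1 <= N * V. 
    { have : d1 * Rabs a * V <= N * V by apply Rmult_le_compat_r. lra. }
    nra. }
  have Hdv : 0 < d1 + V by lra.
  have : Rabs b * (om * d1 / (d1 + V)) <= N.
  { apply Rmult_le_reg_r with (d1 + V) => //.
    replace (Rabs b * (om * d1 / (d1 + V)) * (d1 + V)) with (Rabs b * om * d1) by (field; lra).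
    lra. }
  have : ka * Rabs b <= om * d1 / (d1 + V) * Rabs b by apply Rmult_le_compat_r.
  lra.
Qed.

Section T3.
Variable n : nat.
Notation n3 := (S (S (S n))).
Definition o0 : 'I_n3 := @Ordinal n3 0 isT.
Definition o1 : 'I_n3 := @Ordinal n3 1 isT.
Definition o2 : 'I_n3 := @Ordinal n3 2 isT.

Definition pick3 (a b : 'I_n3) : 'I_n3 :=
  if (o0 != a) && (o0 != b) then o0 else if (o1 != a) && (o1 != b) then o1 else o2.

Lemma pick3_ne a b : pick3 a b <> a /\ pick3 a b <> b.
Proof.
  rewrite /pick3.
  case: (o0 =P a) => H0a; case: (o0 =P b) => H0b /=;
  case: (o1 =P a) => H1a; case: (o1 =P b) => H1b /=;
  try (split => H; subst; try done; by []).
  all: split => H; subst; try done; move: H; rewrite /o0 /o1 /o2 => H; inversion H.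
Qed.
End T3.

Lemma INR_le_of_lt (m k : nat) : INR m < INR k + 1 -> (m <= k)%nat.
Proof. move=> H. rewrite -S_INR in H. apply INR_lt in H. lia. Qed.

Lemma find_piece (c : nat -> R) (Dl : R) : (forall m, c (S m) = c m + Dl) -> 0 < Dl ->
  forall K t, c 0%nat <= t <= c (S K) -> exists m, (m <= K)%nat /\ c m <= t <= c (S m).
Proof.
  move=> Hc HD. elim => [|K IH] t Ht.
  - exists 0%nat; split => //.
  - case: (Rle_lt_dec t (c (S K))) => H.
    + case: (IH t ltac:(lra)) => m [Hm Hm']. exists m; split => //. lia.
    + exists (S K); split => //. lra.
Qed.

Lemma transverse3 s n (f : R -> Eucl (S (S (S n)))) : smooth_ge1 s ->
  (forall i, Cs' s (fun t => f t i)) ->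
  (forall t, 0 <= t <= 1 -> exists i, Derive (fun u => f u i) t <> 0) ->
  exists w, Transverse s (S (S (S n))) f w.
Proof.
  move=> Hs Hf Hnz.
  have Hfd' : forall i x, continuous (Derive (fun t => f t i)) x.
  { move=> i. apply (Cs_C1 s _ Hs (Hf i)). }
  case: (coord_window (fun t i => Derive (fun u => f u i) t) Hfd' Hnz) => d1 [Hd1 U1].
  case: (unif_bound (fun t i => Derive (fun u => f u i) t) Hfd') => dV [V [HdV [HV UV]]].
  set Dl := d1 / 4.
  have HDl : 0 < Dl by rewrite /Dl; lra.
  pose c := fun m : nat => - Dl + INR m * Dl.
  have Hc : forall m, c (S m) = c m + Dl by move=> m; rewrite /c S_INR; ring.
  have Hcdef : forall m, c m = - Dl + INR m * Dl by [].
  have HDldef : Dl = d1 / 4 by [].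
  clearbody c. clearbody Dl.
  case: (nat_unbounded ((1 + 3 * Dl) / Dl)) => N HN.
  have HcN : 1 + 2 * Dl < c N.
  { rewrite Hcdef. have : (1 + 3 * Dl) < INR N * Dl.
    { apply Rmult_lt_reg_r with (/ Dl). by apply Rinv_0_lt_compat.
      rewrite Rmult_assoc Rinv_r; lra. }
    lra. }
  have Hi : forall m, exists j : 'I_(S (S (S n))), near01 d1 (c m) ->
      forall z, Rabs (z - c m) < d1 -> d1 <= Rabs (Derive (fun u => f u j) z).
  { move=> m. case: (classic (near01 d1 (c m))) => H.
    - case: (U1 _ H) => j Hj. by exists j.
    - exists (o0 n) => //. }
  pose i := fun m => proj1_sig (constructive_indefinite_description _ (Hi m)).
  have Hi' : forall m, near01 d1 (c m) ->
      forall z, Rabs (z - c m) < d1 -> d1 <= Rabs (Derive (fun u => f u (i m)) z).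
  { move=> m. rewrite /i. case: (constructive_indefinite_description _ (Hi m)) => j Hj /=. exact Hj. }
  pose j := fun m => pick3 n (i m) (i (S m)).
  pose beta := fun m t => psi (t + (Dl / 4 - c m)) * psi ((c (S m) + Dl / 4) - t).
  pose term := fun m t (k : 'I_(S (S (S n)))) => if j m == k then beta m t else 0.
  pose wsum := fix wsum (M : nat) t k := match M with
                 | O => term O t k | S M' => wsum M' t k + term (S M') t k end.
  exists (fun t k => wsum N t k). split.
  { move=> k. elim: N {HN HcN} => [|M IH].
    - rewrite /=. rewrite /term. case: (j 0%nat == k).
      + apply Cs_mult. apply: (Cs_comp s psi (fun t => t + (Dl / 4 - c 0%nat))).
        apply Cs_inf => ?; apply psi_Cn. apply Cs_plus. apply Cs_id. apply Cs_const.
        apply: (Cs_comp s psi (fun t => (c 1%nat + Dl / 4) - t)).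
        apply Cs_inf => ?; apply psi_Cn. apply Cs_minus. apply Cs_const. apply Cs_id.
      + apply Cs_const.
    - rewrite /=. apply Cs_plus => //. rewrite /term. case: (j (S M) == k).
      + apply Cs_mult. apply: (Cs_comp s psi (fun t => t + (Dl / 4 - c (S M)))).
        apply Cs_inf => ?; apply psi_Cn. apply Cs_plus. apply Cs_id. apply Cs_const.
        apply: (Cs_comp s psi (fun t => (c (S (S M)) + Dl / 4) - t)).
        apply Cs_inf => ?; apply psi_Cn. apply Cs_minus. apply Cs_const. apply Cs_id.
      + apply Cs_const. }
  have beta_nonneg : forall m t, 0 <= beta m t.
  { move=> m t. rewrite /beta. apply Rmult_le_pos; apply psi_nonneg. }
  have term_nonneg : forall m t k, 0 <= term m t k.
  { move=> m t k. rewrite /term. case: (j m == k) => //. lra. }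
  have wsum_nonneg : forall M t k, 0 <= wsum M t k.
  { elim => [|M IH] t k /=. apply term_nonneg. have := IH t k. have := term_nonneg (S M) t k. lra. }
  have wsum_zero : forall M t k, (forall m, (m <= M)%nat -> beta m t <> 0 -> j m <> k) -> wsum M t k = 0.
  { have term0 : forall m t k, (beta m t <> 0 -> j m <> k) -> term m t k = 0.
    { move=> m t k H. rewrite /term. case: (j m =P k) => // E.
      apply NNPP => Hb. by apply (H Hb). }
    elim => [|M IH] t k H /=. apply term0. apply H. lia.
    rewrite IH. rewrite term0. ring. apply H. lia. move=> m Hm. apply H. lia. }
  have wsum_ge : forall M t m, (m <= M)%nat -> beta m t <= wsum M t (j m).
  { elim => [|M IH] t m Hm /=.
    - have -> : m = 0%nat by lia. rewrite /term eqxx. lra.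
    - case: (Nat.eq_dec m (S M)) => E.
      + subst m. rewrite /term eqxx. have := wsum_nonneg M t (j (S M)). lra.
      + have := IH t m ltac:(lia). have := term_nonneg (S M) t (j m). lra. }
  have beta_ne0 : forall m t, beta m t <> 0 -> c m - Dl / 4 < t < c (S m) + Dl / 4.
  { move=> m t H. rewrite /beta in H.
    have H1 : psi (t + (Dl / 4 - c m)) <> 0. { move=> E; apply H; rewrite E; ring. }
    have H2 : psi (c (S m) + Dl / 4 - t) <> 0. { move=> E; apply H; rewrite E; ring. }
    have := psi_ne0 _ H1. have := psi_ne0 _ H2. lra. }
  set om := psi (Dl / 4) * psi (Dl / 4).
  have Hom : 0 < om by rewrite /om; have := psi_pos (Dl / 4) ltac:(lra); nra.
  have beta_ge : forall m t, c m <= t <= c (S m) -> om <= beta m t.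
  { move=> m t Ht. rewrite /om /beta.
    apply Rmult_le_compat. apply psi_nonneg. apply psi_nonneg.
    apply psi_mono. case: Ht => Ht1 Ht2. move: Ht1. generalize (c m) => cm. lra.
    apply psi_mono. rewrite Hc in Ht |- *. move: Ht. generalize (c m) => cm. lra. }
  have Hcpos : forall m, - Dl <= c m.
  { move=> m. rewrite Hcdef. have := pos_INR m. nra. }
  have Hnat : forall a b k, k <= 1 -> INR a * Dl < INR b * Dl + k * Dl -> (a <= b)%nat.
  { move=> a b k Hk H. apply INR_le_of_lt.
    have : INR a < INR b + k.
    { apply Rmult_lt_reg_r with Dl => //. lra. }
    lra. }
  exists (Rmin d1 (om * d1 / (d1 + V))), (Rmin (Dl / 2) dV).
  split. apply Rmin_pos => //. apply Rdiv_lt_0_compat; nra.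
  split. apply Rmin_pos; lra.
  move=> t Ht al be.
  have HtV : near01 dV t by apply: near01_mono Ht; apply Rmin_r.
  have Ht2 : - (Dl / 2) < t < 1 + Dl / 2.
  { case: Ht => x [Hx Htx]. have := Rmin_l (Dl / 2) dV. move: Htx. rewrite /Rabs.
    case: (Rcase_abs _); lra. }
  have Hc0 : c 0%nat = - Dl by rewrite Hcdef /=; ring.
  case: (find_piece c Dl Hc HDl N t) => [|ms [Hms Hpc]].
  { rewrite Hc0 Hc. lra. }
  have Hnear : forall m, c ms <= c m <= c ms + Dl -> near01 d1 (c m).
  { move=> m Hm. apply near01_int => //. have := Hcpos ms. rewrite HDldef in Hpc Hm Ht2 HDl |- *.
    move: Hpc Hm. generalize (c m) (c ms) (c (S ms)) => x y z. lra. }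
  have [i0 [Hgood Hz]] : exists i0, d1 <= Rabs (Derive (fun u => f u i0) t) /\
      forall m, (m <= N)%nat -> beta m t <> 0 -> j m <> i0.
  { have absA : forall x y, y <= x -> x <= y + Dl -> Rabs (x - y) < d1.
    { move=> x y H1 H2. rewrite Rabs_right; [|lra]. rewrite HDldef in H2. lra. }
    have absB : forall x y, x <= y -> y <= x + Dl -> Rabs (x - y) < d1.
    { move=> x y H1 H2. rewrite Rabs_left1; [|lra]. rewrite HDldef in H2. lra. }
    have HnS : near01 d1 (c (S ms)).
    { apply Hnear. rewrite Hc. generalize (c ms) => x. lra. }
    have Hn0 : near01 d1 (c ms).
    { apply Hnear. generalize (c ms) => x. lra. }
    case: Hpc => Hpc1 Hpc2.
    case: (Rle_lt_dec t (c ms + Dl / 2)) => Hcase.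
    - exists (i ms). split.
      + apply Hi' => //. apply absA => //. move: Hcase. generalize (c ms) => x. lra.
      + move=> m Hm Hb. have [Hb1 Hb2] := beta_ne0 m t Hb.
        have H1 : (m <= ms)%nat.
        { apply (Hnat m ms (3/4)). lra. move: Hb1 Hcase. rewrite !Hcdef.
          generalize (INR m * Dl) (INR ms * Dl) => x y. lra. }
        have H2 : (ms <= S m)%nat.
        { apply (Hnat ms (S m) (1/4)). lra. move: Hb2 Hpc1. rewrite !Hcdef.
          generalize (INR (S m) * Dl) (INR ms * Dl) => x y. lra. }
        case: (Nat.eq_dec m ms) => E.
        * subst m. rewrite /j. apply (pick3_ne n (i ms) (i (S ms))).
        * have E' : ms = S m by lia. subst ms. rewrite /j. apply (pick3_ne n (i m) (i (S m))).
    - exists (i (S ms)). split.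
      + apply Hi' => //. apply absB => //. rewrite Hc. move: Hcase. generalize (c ms) => x. lra.
      + move=> m Hm Hb. have [Hb1 Hb2] := beta_ne0 m t Hb.
        have H1 : (m <= S ms)%nat.
        { apply (Hnat m (S ms) (1/4)). lra. move: Hb1 Hpc2. rewrite !Hcdef.
          generalize (INR m * Dl) (INR (S ms) * Dl) => x y. lra. }
        have H2 : (ms <= m)%nat.
        { apply (Hnat ms m (3/4)). lra. move: Hb2 Hcase. rewrite !Hcdef S_INR.
          rewrite Rmult_plus_distr_r Rmult_1_l. generalize (INR m * Dl) (INR ms * Dl) => x y. lra. }
        case: (Nat.eq_dec m ms) => E.
        * subst m. rewrite /j. apply (pick3_ne n (i ms) (i (S ms))).
        * have E' : m = S ms by lia. subst m. rewrite /j. apply (pick3_ne n (i (S ms)) (i (S (S ms)))). }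
  have Hw0 : wsum N t i0 = 0 by apply wsum_zero.
  have Hwj : om <= wsum N t (j ms).
  { apply Rle_trans with (beta ms t). by apply beta_ge. by apply wsum_ge. }
  have Hvj : Rabs (Derive (fun u => f u (j ms)) t) <= V.
  { have := UV t HtV. have := nrm_ge (fun i => Derive (fun u => f u i) t) (j ms). simpl. lra. }
  apply (tr3_alg al be (Derive (fun u => f u i0) t) (Derive (fun u => f u (j ms)) t)
     (wsum N t (j ms)) d1 V om) => //. lra.
  - have := nrm_ge (fun i => al * Derive (fun u => f u i) t + be * wsum N t i) i0.
    simpl. rewrite Hw0 Rmult_0_r Rplus_0_r. done.
  - apply (nrm_ge (fun i => al * Derive (fun u => f u i) t + be * wsum N t i) (j ms)).
Qed.



Theorem lemma6p4 (s : smoothness) (n : nat) (L O : Eucl n -> Prop) :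
  smooth_ge1 s -> (2 <= n)%nat ->
  is_arc s L -> nbhd_of O L ->
  exists G : Eucl n -> Prop,
    is_simple_closed_curve s G /\
    (forall p, L p -> G p) /\ (forall p, G p -> O p).
Proof.
  move=> Hs Hn [f [Hf [Hinj [Hreg HL]]]] [HO HLO].
  have Hf' : forall i, Cs' s (fun t => f t i) by move=> i; apply Cs_iff, Hf.
  have HfO : forall t, 0 <= t <= 1 -> O (f t).
  { move=> t Ht. apply HLO, HL. by exists t. }
  have [w [Hw Htr]] : exists w, Transverse s n f w.
  { destruct n as [|[|[|n']]]; try lia.
    - by apply transverse2.
    - by apply transverse3. }
  case: (main_constr s n f w O Hs Hf' Hw Hinj Hreg HO HfO Htr) => G [HG [H1 H2]].
  exists G; split => //; split => //.
  move=> p /HL [t [Ht ->]]. by apply H1.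
Qed.
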